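(* Assume (A1)–(A6) and that the numerical integrator $\Psi$ has order $p\ge1$ in $X$ for the problems $v'(s)=f(t_n+s,v(s))$ and $z'(s)=f(t_n+\frac k2+s,z(s))$. Let $\overline w_n$ be the generalized solution of $\overline w_n'=A\overline w_n$, $\overline w_n(0)=\Psi_{k/2}^{f,t_n}(u(t_n))$, $\partial\overline w_n(s)=\partial\big(u(t_n)+\frac k2 f(t_n,u(t_n))+sAu(t_n)\big)$, and let $\overline u_{n+1}=\Psi_{k/2}^{f,t_n+k/2}(\overline w_n(k))$ (one step of the modified exponential Strang method started from the exact value). Then the local error satisfies $$\rho_{n+1}:=\overline u_{n+1}-u(t_{n+1})=O(k^2).$$
   Context: Let $X,Y$ be Banach spaces, $T>0$, $A:D(A)\subset X\to X$ and $\partial:D(A)\to Y$ linear operators, $f:[0,T]\times X\to X$, $g:[0,T]\to Y$, and let $u$ be the solution of $u'(t)=Au(t)+f(t,u(t))$, $u(0)=u_0$, $\partial u(t)=g(t)$, $0\le t\le T$. Standing hypotheses: (A1) $\partial$ is onto. (A2) $\ker\partial$ is dense in $X$ and the restriction $A_0$ of $A$ to $D(A_0)=\ker\partial$ generates a $C_0$-semigroup $(e^{tA_0})_{t\ge0}$ on $X$ of negative type $\omega$. (A3) For every $z\in\mathbb C$ with $\Re z>\omega$ and $v\in Y$, the problem $Ax=zx$, $\partial x=v$ has a unique solution $x=:K(z)v\in D(A)$, and $\|K(z)v\|\le C\|v\|$ with $C$ uniform for $\Re z\ge\omega_0>\omega$. (A4) $f\in C^1([0,T]\times X,X)$. (A5)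 $u\in C^2([0,T],X)$, $u(t)\in D(A^2)$ for all $t$, and $Au,A^2u\in C^1([0,T],X)$. (A6) $f(t,u(t))\in D(A)$ for all $t$ and $Af(\cdot,u(\cdot))\in C([0,T],X)$. Generalized solution: for $u_0\in X$, $v_0,v_1\in Y$, the generalized solution of $w'(s)=Aw(s)$, $w(0)=u_0$, $\partial w(s)=v_0+v_1s$ is $w(s)=e^{sA_0}(u_0-K(0)v_0)+K(0)(v_0+v_1s)-\int_0^s e^{\sigma A_0}K(0)v_1\,d\sigma$. Time step $k>0$, $t_n=nk$. For $\tau\in[0,T]$, $\Psi_k^{f,\tau}(v_0)$ denotes one step of size $k$ of a numerical integrator applied to $v'(s)=f(\tau+s,v(s))$, $v(0)=v_0$; order $p$ means $\Psi_k^{f,\tau}(v_0)-v(k)=O(k^{p+1})$ uniformly for the arguments considered. Notation $a=O(b)$ means $\|a\|\le Cb$ with $C$ independent of $k$ (small enough) and of $n$ with $0\le nk\le T$. *)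

(* Defs.v *)
From Stdlib Require Export Reals Lra ClassicalEpsilon.
Open Scope R_scope.

Class Banach (V : Type) := {
  bzero : V;
  badd : V -> V -> V;
  bopp : V -> V;
  bscal : R -> V -> V;
  bnorm : V -> R;
  badd_assoc : forall x y z, badd x (badd y z) = badd (badd x y) z;
  badd_comm : forall x y, badd x y = badd y x;
  badd_0 : forall x, badd x bzero = x;
  badd_opp : forall x, badd x (bopp x) = bzero;
  bscal_1 : forall x, bscal 1 x = x;
  bscal_assoc : forall a b x, bscal a (bscal b x) = bscal (a * b) x;
  bscal_distr_v : forall a x y, bscal a (badd x y) = badd (bscal a x) (bscal a y);
  bscal_distr_s : forall a b x, bscal (a + b) x = badd (bscal a x) (bscal b x);
  bnorm_eq0 : forall x, bnorm x = 0 -> x = bzero;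
  bnorm_triangle : forall x y, bnorm (badd x y) <= bnorm x + bnorm y;
  bnorm_scal : forall a x, bnorm (bscal a x) = Rabs a * bnorm x;
  bcomplete : forall u : nat -> V,
    (forall eps, eps > 0 -> exists N, forall m n, (m >= N)%nat -> (n >= N)%nat ->
        bnorm (badd (u m) (bopp (u n))) < eps) ->
    exists l, forall eps, eps > 0 -> exists N, forall n, (n >= N)%nat ->
        bnorm (badd (u n) (bopp l)) < eps
}.

Definition bsub {V} `{Banach V} (x y : V) : V := badd x (bopp y).

Definition lim_in {V} `{Banach V} (Dm : R -> Prop) (g : R -> V) (a : R) (l : V) : Prop :=
  forall eps, eps > 0 -> exists delta, delta > 0 /\
    forall t, Dm t -> t <> a -> Rabs (t - a) < delta -> bnorm (bsub (g t) l) < eps.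

Definition cont_on {V} `{Banach V} (a b : R) (g : R -> V) : Prop :=
  forall t, a <= t <= b -> lim_in (fun s => a <= s <= b) g t (g t).

Definition deriv_on {V} `{Banach V} (a b : R) (g g' : R -> V) : Prop :=
  forall t, a <= t <= b ->
    lim_in (fun h => a <= t + h <= b) (fun h => bscal (/ h) (bsub (g (t + h)) (g t))) 0 (g' t).

Definition C1_on {V} `{Banach V} (a b : R) (g : R -> V) : Prop :=
  exists g', deriv_on a b g g' /\ cont_on a b g'.

Definition C2_on {V} `{Banach V} (a b : R) (g : R -> V) : Prop :=
  exists g', deriv_on a b g g' /\ C1_on a b g'.

Fixpoint bsum {V} `{Banach V} (N : nat) (F : nat -> V) : V :=
  match N with O => bzero | S n => badd (bsum n F) (F n) end.

(** Riemann integral (limit of uniform Riemann sums; used only for continuous integrands). *)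
Definition is_RInt {V} `{Banach V} (g : R -> V) (a b : R) (I : V) : Prop :=
  forall eps, eps > 0 -> exists N0, forall N, (N >= N0)%nat -> (N > 0)%nat ->
    bnorm (bsub (bscal ((b - a) / INR N)
                   (bsum N (fun i => g (a + INR i * (b - a) / INR N)))) I) < eps.

Definition RInt {V} `{Banach V} (g : R -> V) (a b : R) : V :=
  epsilon (inhabits bzero) (fun I => is_RInt g a b I).

Definition subspace {V} `{Banach V} (Dm : V -> Prop) : Prop :=
  Dm bzero /\ forall x y a, Dm x -> Dm y -> Dm (badd x y) /\ Dm (bscal a x).

Definition lin_on {V W} `{Banach V} `{Banach W} (Dm : V -> Prop) (L : V -> W) : Prop :=
  forall x y a, Dm x -> Dm y -> L (badd x y) = badd (L x) (L y) /\ L (bscal a x) = bscal a (L x).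

Definition bounded_linear {V W} `{Banach V} `{Banach W} (L : V -> W) : Prop :=
  lin_on (fun _ => True) L /\ exists M, forall x, bnorm (L x) <= M * bnorm x.

Definition C0_semigroup {V} `{Banach V} (S : R -> V -> V) : Prop :=
  (forall t, t >= 0 -> bounded_linear (S t)) /\
  (forall x, S 0 x = x) /\
  (forall t s x, t >= 0 -> s >= 0 -> S (t + s) x = S t (S s x)) /\
  (forall x, lim_in (fun t => t >= 0) (fun t => S t x) 0 x).

Definition generates {V} `{Banach V} (S : R -> V -> V) (D0 : V -> Prop) (A0 : V -> V) : Prop :=
  forall x,
    (D0 x <-> exists l, lim_in (fun h => h > 0) (fun h => bscal (/ h) (bsub (S h x) x)) 0 l) /\
    (D0 x -> lim_in (fun h => h > 0) (fun h => bscal (/ h) (bsub (S h x) x)) 0 (A0 x)).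

Definition negative_type {V} `{Banach V} (S : R -> V -> V) (omega : R) : Prop :=
  omega < 0 /\ exists M, forall t x, t >= 0 -> bnorm (S t x) <= M * exp (omega * t) * bnorm x.

(** f in C^1([0,T] x X, X) (Frechet, derivative continuous in operator norm);
    [Df t x s y] is the derivative at (t,x) applied to the increment (s,y). *)
Definition C1_TX {V} `{Banach V} (T : R) (f : R -> V -> V) : Prop :=
  exists Df : R -> V -> R -> V -> V,
    (forall t x, 0 <= t <= T ->
       (forall s1 s2 y1 y2 a,
          Df t x (s1 + s2) (badd y1 y2) = badd (Df t x s1 y1) (Df t x s2 y2) /\
          Df t x (a * s1) (bscal a y1) = bscal a (Df t x s1 y1)) /\
       (exists M, forall s y, bnorm (Df t x s y) <= M * (Rabs s + bnorm y))) /\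
    (forall t x, 0 <= t <= T -> forall eps, eps > 0 -> exists delta, delta > 0 /\
       forall s y, 0 <= t + s <= T -> Rabs s + bnorm y < delta ->
         bnorm (bsub (bsub (f (t + s) (badd x y)) (f t x)) (Df t x s y))
           <= eps * (Rabs s + bnorm y)) /\
    (forall t x, 0 <= t <= T -> forall eps, eps > 0 -> exists delta, delta > 0 /\
       forall t' x', 0 <= t' <= T -> Rabs (t' - t) + bnorm (bsub x' x) < delta ->
         forall s y, bnorm (bsub (Df t' x' s y) (Df t x s y)) <= eps * (Rabs s + bnorm y)).

(** Generalized solution of w' = A w, w(0) = u0, d w(s) = v0 + v1 s, with K0 = K(0):
    w(s) = S s (u0 - K0 v0) + K0 (v0 + s v1) - int_0^s S sigma (K0 v1) dsigma. *)
Definition gen_sol {X Y} `{Banach X} `{Banach Y} (S : R -> X -> X) (K0 : Y -> X)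
    (u0 : X) (v0 v1 : Y) (s : R) : X :=
  bsub (badd (S s (bsub u0 (K0 v0))) (K0 (badd v0 (bscal s v1))))
       (RInt (fun sigma => S sigma (K0 v1)) 0 s).

Definition wbar_k {X Y} `{Banach X} `{Banach Y} (S : R -> X -> X) (K : R -> Y -> X)
    (A : X -> X) (dA : X -> Y) (f : R -> X -> X) (Psi : R -> R -> X -> X)
    (u : R -> X) (k : R) (n : nat) : X :=
  let tn := INR n * k in
  gen_sol S (K 0) (Psi (k / 2) tn (u tn))
    (dA (badd (u tn) (bscal (k / 2) (f tn (u tn))))) (dA (A (u tn))) k.

(* Main.v *)
Require Import Defs.
From Stdlib Require Import Reals Lra Lia List Psatz ClassicalEpsilon ZArith Classical.
Open Scope R_scope.

Section Alg.
Context {V : Type} {BV : Banach V}.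

Lemma badd_0_l x : badd bzero x = x.
Proof. rewrite badd_comm; apply badd_0. Qed.

Lemma bscal_0_l x : bscal 0 x = bzero.
Proof.
  assert (H := bscal_distr_s 0 0 x). replace (0+0) with 0 in H by ring.
  assert (H2: badd (bscal 0 x) (bopp (bscal 0 x)) = badd (badd (bscal 0 x) (bscal 0 x)) (bopp (bscal 0 x))) by (rewrite <- H; reflexivity).
  rewrite badd_opp, <- badd_assoc, badd_opp, badd_0 in H2. auto.
Qed.

Lemma bopp_scal x : bopp x = bscal (-1) x.
Proof.
  assert (H : badd x (bscal (-1) x) = bzero).
  { rewrite <- (bscal_1 x) at 1. rewrite <- bscal_distr_s. replace (1 + -1) with 0 by ring. apply bscal_0_l. }
  assert (E: bopp x = badd (badd x (bscal (-1) x)) (bopp x)) by (rewrite H; rewrite badd_0_l; auto).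
  rewrite E, (badd_comm x), <- badd_assoc, badd_opp, badd_0. auto.
Qed.

Lemma bscal_0_r a : bscal a bzero = bzero.
Proof. rewrite <- (bscal_0_l bzero), bscal_assoc. replace (a*0) with 0 by ring. auto. Qed.

Inductive vexp := VAt (n : nat) | V0 | VAdd (e1 e2 : vexp) | VOpp (e : vexp)
 | VScal (r : R) (e : vexp) | VSub (e1 e2 : vexp).

Fixpoint vden (env : nat -> V) (e : vexp) : V :=
  match e with
  | VAt n => env n | V0 => bzero | VAdd a b => badd (vden env a) (vden env b)
  | VOpp a => bopp (vden env a) | VScal r a => bscal r (vden env a)
  | VSub a b => bsub (vden env a) (vden env b) end.

Fixpoint vcoef (e : vexp) (i : nat) : R :=
  match e with
  | VAt n => if Nat.eqb i n then 1 else 0 | V0 => 0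
  | VAdd a b => vcoef a i + vcoef b i | VOpp a => - vcoef a i
  | VScal r a => r * vcoef a i | VSub a b => vcoef a i - vcoef b i end.

Fixpoint vmax (e : vexp) : nat :=
  match e with
  | VAt n => S n | V0 => O | VAdd a b => Nat.max (vmax a) (vmax b) | VOpp a => vmax a
  | VScal _ a => vmax a | VSub a b => Nat.max (vmax a) (vmax b) end.

Lemma bsum_ext N F G : (forall i, (i < N)%nat -> F i = G i) -> bsum N F = bsum N G.
Proof. induction N; simpl; intros; auto. rewrite IHN, H; auto. Qed.

Lemma bsum_add_fun N F G : bsum N (fun i => badd (F i) (G i)) = badd (bsum N F) (bsum N G).
Proof.
  induction N; simpl. rewrite badd_0; auto.
  rewrite IHN. rewrite !badd_assoc. f_equal. rewrite <- !badd_assoc. f_equal. apply badd_comm.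
Qed.

Lemma bsum_scal_fun N r F : bsum N (fun i => bscal r (F i)) = bscal r (bsum N F).
Proof. induction N; simpl. rewrite bscal_0_r; auto. rewrite IHN, bscal_distr_v; auto. Qed.

Lemma bsum_zero N : bsum N (fun _ => bzero) = bzero.
Proof. induction N; simpl; auto. rewrite IHN, badd_0; auto. Qed.

Lemma vcoef_out e i : (vmax e <= i)%nat -> vcoef e i = 0.
Proof.
  induction e; simpl; intros; try (rewrite ?IHe1, ?IHe2, ?IHe; try lia; ring).
  destruct (Nat.eqb_spec i n); [lia|auto].
Qed.

Lemma vden_nf env e N : (vmax e <= N)%nat ->
  vden env e = bsum N (fun i => bscal (vcoef e i) (env i)).
Proof.
  induction e; simpl; intros.
  - induction N. lia. simpl. destruct (Nat.eq_dec n N).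
    + subst. rewrite Nat.eqb_refl, bscal_1.
      rewrite (bsum_ext _ _ (fun _ => bzero)). rewrite bsum_zero, badd_0_l; auto.
      intros. destruct (Nat.eqb_spec i N); [lia|]. apply bscal_0_l.
    + rewrite IHN by lia. destruct (Nat.eqb_spec N n); [lia|]. rewrite bscal_0_l, badd_0; auto.
  - rewrite (bsum_ext _ _ (fun _ => bzero)). symmetry; apply bsum_zero.
    intros; apply bscal_0_l.
  - rewrite IHe1, IHe2 by lia. rewrite <- bsum_add_fun. apply bsum_ext; intros.
    rewrite bscal_distr_s; auto.
  - rewrite IHe by lia. rewrite bopp_scal, <- bsum_scal_fun. apply bsum_ext; intros.
    rewrite bscal_assoc. f_equal; ring.
  - rewrite IHe by lia. rewrite <- bsum_scal_fun. apply bsum_ext; intros.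
    rewrite bscal_assoc. auto.
  - unfold bsub. rewrite IHe1, IHe2 by lia. rewrite bopp_scal, <- bsum_scal_fun, <- bsum_add_fun.
    apply bsum_ext; intros. rewrite bscal_assoc, <- bscal_distr_s. f_equal; ring.
Qed.

Lemma vexp_eq env e1 e2 : (forall i, vcoef e1 i = vcoef e2 i) -> vden env e1 = vden env e2.
Proof.
  intros H. rewrite (vden_nf env e1 (Nat.max (vmax e1) (vmax e2))) by lia.
  rewrite (vden_nf env e2 (Nat.max (vmax e1) (vmax e2))) by lia.
  apply bsum_ext; intros; rewrite H; auto.
Qed.

End Alg.

Ltac inlist t l :=
  match l with
  | nil => constr:(false)
  | t :: _ => constr:(true)
  | _ :: ?l' => inlist t l'
  end.

Ltac add_atoms t l :=
  match t with
  | badd ?a ?b => let l1 := add_atoms a l in add_atoms b l1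
  | bsub ?a ?b => let l1 := add_atoms a l in add_atoms b l1
  | bopp ?a => add_atoms a l
  | bscal _ ?a => add_atoms a l
  | bzero => l
  | _ => let b := inlist t l in
         match b with true => l | false => constr:(t :: l) end
  end.

Ltac find_idx t l :=
  match l with
  | t :: _ => constr:(O)
  | _ :: ?l' => let n := find_idx t l' in constr:(S n)
  end.

Ltac reify t l :=
  match t with
  | badd ?a ?b => let x := reify a l in let y := reify b l in constr:(VAdd x y)
  | bsub ?a ?b => let x := reify a l in let y := reify b l in constr:(VSub x y)
  | bopp ?a => let x := reify a l in constr:(VOpp x)
  | bscal ?r ?a => let x := reify a l in constr:(VScal r x)
  | bzero => constr:(V0)
  | _ => let n := find_idx t l in constr:(VAt n)
  end.

Ltac destr_n i l :=
  match l with
  | nil => simpl; first [ring | lra | nra]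
  | _ :: ?l' => destruct i as [|i]; [simpl; first [ring | lra | nra] | destr_n i l']
  end.

Ltac vring :=
  match goal with
  | |- @eq ?V ?x ?y =>
    let l0 := add_atoms x (@nil V) in
    let l := add_atoms y l0 in
    let ex := reify x l in
    let ey := reify y l in
    change (vden (fun i => nth i l bzero) ex = vden (fun i => nth i l bzero) ey);
    apply vexp_eq; let i := fresh "i" in intro i; simpl vcoef;
    destr_n i l
  end.



Section Norm.
Context {V : Type} {BV : Banach V}.

Lemma bnorm_zero : bnorm (@bzero V BV) = 0.
Proof. rewrite <- (bscal_0_l bzero), bnorm_scal, Rabs_R0. ring. Qed.

Lemma bnorm_opp x : bnorm (bopp x) = bnorm x.
Proof. rewrite bopp_scal, bnorm_scal. rewrite Rabs_left by lra. ring. Qed.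

Lemma bnorm_ge0 x : 0 <= bnorm x.
Proof.
  assert (H := bnorm_triangle x (bopp x)). rewrite badd_opp, bnorm_zero, bnorm_opp in H. lra.
Qed.

Lemma bnorm_sub_sym x y : bnorm (bsub x y) = bnorm (bsub y x).
Proof. replace (bsub x y) with (bopp (bsub y x)) by vring. apply bnorm_opp. Qed.

Lemma bnorm_tri3 x y z : bnorm (bsub x z) <= bnorm (bsub x y) + bnorm (bsub y z).
Proof. replace (bsub x z) with (badd (bsub x y) (bsub y z)) by vring. apply bnorm_triangle. Qed.

Lemma bnorm_sub_le x y : bnorm (bsub x y) <= bnorm x + bnorm y.
Proof. unfold bsub. rewrite <- (bnorm_opp y). apply bnorm_triangle. Qed.

Lemma bnorm_sub_self x : bnorm (bsub x x) = 0.
Proof. unfold bsub. rewrite badd_opp. apply bnorm_zero. Qed.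

Lemma bnorm_rev x y : bnorm x - bnorm y <= bnorm (bsub x y).
Proof. replace x with (badd (bsub x y) y) at 1 by vring. assert (H:=bnorm_triangle (bsub x y) y). lra. Qed.

Lemma bnorm_eq0_sub x y : bnorm (bsub x y) <= 0 -> x = y.
Proof.
  intros H. assert (bnorm (bsub x y) = 0) by (pose proof (bnorm_ge0 (bsub x y)); lra).
  apply bnorm_eq0 in H0. replace x with (badd (bsub x y) y) by vring. rewrite H0. apply badd_0_l.
Qed.

Definition ucont (a b : R) (g : R -> V) : Prop :=
  forall s, a <= s <= b -> forall eps, eps > 0 -> exists eta, eta > 0 /\
    forall t, a <= t <= b -> Rabs (t - s) < eta -> bnorm (bsub (g t) (g s)) < eps.

Lemma mvi_core (g : R -> V) a b B : a <= b -> ucont a b g ->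
  (forall s, a <= s < b -> exists eta, eta > 0 /\ forall d, 0 < d < eta -> s + d <= b ->
      bnorm (bsub (g (s + d)) (g s)) <= B * d) ->
  bnorm (bsub (g b) (g a)) <= B * (b - a).
Proof.
  intros Hab Hc Hd.
  destruct (Req_dec a b) as [->|Hne].
  { rewrite bnorm_sub_self. lra. }
  assert (Hlt : a < b) by lra.
  assert (HB : 0 <= B).
  { destruct (Hd a) as [eta [Heta H]]. lra.
    set (d := Rmin (eta/2) (b - a)).
    assert (0 < d) by (unfold d; apply Rmin_glb_lt; lra).
    assert (d <= eta/2) by apply Rmin_l. assert (d <= b - a) by apply Rmin_r.
    specialize (H d ltac:(lra) ltac:(lra)). pose proof (bnorm_ge0 (bsub (g (a + d)) (g a))).
    destruct (Rle_or_lt 0 B); auto. nra. }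
  apply Rle_plus_epsilon. intros e0 He0.
  set (eps := e0 / (b - a + 1)).
  assert (Heps : 0 < eps) by (unfold eps; apply Rdiv_lt_0_compat; lra).
  set (P := fun y => bnorm (bsub (g y) (g a)) <= (B + eps) * (y - a) + eps).
  set (E := fun x => a <= x <= b /\ forall y, a <= y <= x -> P y).
  assert (Ea : E a).
  { split. lra. intros y Hy. replace y with a by lra. unfold P. rewrite bnorm_sub_self. nra. }
  assert (Hbd : bound E) by (exists b; intros x [Hx _]; lra).
  destruct (completeness E Hbd (ex_intro _ a Ea)) as [c [Hub Hlub]].
  assert (Hac : a <= c) by (apply Hub; auto).
  assert (Hcb : c <= b) by (apply Hlub; intros x [Hx _]; lra).
  assert (Hlt_c : forall y, a <= y < c -> P y).
  { intros y Hy. destruct (Classical_Prop.classic (exists x, E x /\ y < x)) as [[x [[Hx1 Hx2] Hyx]]|Hn].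
    - apply Hx2. lra.
    - exfalso. assert (c <= y). { apply Hlub. intros x Ex. destruct (Rle_or_lt x y); auto. exfalso; apply Hn; eauto. } lra. }
  assert (Pc : P c).
  { destruct (Req_dec c a) as [->|Hca]. { unfold P. rewrite bnorm_sub_self. nra. }
    unfold P. apply Rle_plus_epsilon. intros e1 He1.
    destruct (Hc c ltac:(lra) e1 He1) as [eta [Heta Hcont]].
    set (y := Rmax a (c - eta/2)).
    assert (a <= y) by apply Rmax_l. assert (c - eta/2 <= y) by apply Rmax_r.
    assert (y < c) by (unfold y; apply Rmax_lub_lt; lra).
    specialize (Hlt_c y ltac:(lra)). unfold P in Hlt_c.
    specialize (Hcont y ltac:(lra) ltac:(rewrite Rabs_left; lra)).
    rewrite bnorm_sub_sym in Hcont.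
    pose proof (bnorm_tri3 (g c) (g y) (g a)). nra. }
  assert (Hall : forall y, a <= y <= c -> P y).
  { intros y Hy. destruct (Req_dec y c) as [->|]; auto. apply Hlt_c. lra. }
  assert (Hcb' : c = b).
  { destruct (Req_dec c b) as [|Hcbne]; auto. exfalso.
    destruct (Hd c ltac:(lra)) as [eta [Heta H]].
    set (d := Rmin (eta/2) (b - c)).
    assert (0 < d) by (unfold d; apply Rmin_glb_lt; lra).
    assert (d <= eta/2) by apply Rmin_l. assert (d <= b - c) by apply Rmin_r.
    assert (E (c + d)).
    { split. lra. intros y Hy. destruct (Rle_or_lt y c). apply Hall; lra.
      unfold P. specialize (H (y - c) ltac:(lra) ltac:(lra)). replace (c + (y - c)) with y in H by ring.
      pose proof (Hall c ltac:(lra)). unfold P in H1.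
      pose proof (bnorm_tri3 (g y) (g c) (g a)). assert (0 <= eps * (y - c)) by nra. unfold P in *. lra. }
    assert (c + d <= c) by (apply Hub; auto). lra. }
  subst c. specialize (Hall b ltac:(lra)). unfold P in Hall.
  assert (eps * (b - a) + eps = e0).
  { unfold eps. field. lra. }
  nra.
Qed.

Lemma mvi (g : R -> V) a b B : a <= b -> ucont a b g ->
  (forall s, a <= s < b -> forall e, e > 0 -> exists eta, eta > 0 /\ forall d, 0 < d < eta -> s + d <= b ->
      bnorm (bsub (g (s + d)) (g s)) <= (B + e) * d) ->
  bnorm (bsub (g b) (g a)) <= B * (b - a).
Proof.
  intros Hab Hc Hd. apply Rle_plus_epsilon. intros e He.
  set (e' := e / (b - a + 1)).
  assert (0 < e') by (unfold e'; apply Rdiv_lt_0_compat; lra).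
  assert (H0 := mvi_core g a b (B + e') Hab Hc (fun s Hs => Hd s Hs e' H)).
  assert (e' * (b - a) <= e).
  { unfold e'. apply (Rmult_le_reg_r (b - a + 1)). lra. field_simplify; lra. }
  nra.
Qed.

Lemma deriv_est a b g g' s : deriv_on a b g g' -> a <= s <= b ->
  forall e, e > 0 -> exists eta, eta > 0 /\ forall d, d <> 0 -> Rabs d < eta -> a <= s + d <= b ->
    bnorm (bsub (bsub (g (s + d)) (g s)) (bscal d (g' s))) <= e * Rabs d.
Proof.
  intros Hd Hs e He. destruct (Hd s Hs e He) as [eta [Heta H]].
  exists eta; split; auto. intros d Hd0 Hdl Hdom.
  specialize (H d Hdom Hd0 ltac:(rewrite Rminus_0_r; auto)).
  set (w := bsub (g (s + d)) (g s)) in *.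
  replace (bsub w (bscal d (g' s))) with (bscal d (bsub (bscal (/ d) w) (g' s))).
  { rewrite bnorm_scal. pose proof (Rabs_pos d). nra. }
  transitivity (bsub (bscal (d * / d) w) (bscal d (g' s))). vring.
  rewrite Rinv_r by auto. rewrite bscal_1. auto.
Qed.

Lemma deriv_ucont_lin a b g g' c a' b' : deriv_on a b g g' -> a <= a' -> b' <= b ->
  ucont a' b' (fun t => bsub (g t) (bscal t c)).
Proof.
  intros Hd Ha Hb s Hs e He.
  destruct (deriv_est a b g g' s Hd ltac:(lra) 1 ltac:(lra)) as [eta [Heta H]].
  set (K := 1 + bnorm (g' s) + bnorm c).
  assert (HK : 0 < K) by (unfold K; pose proof (bnorm_ge0 (g' s)); pose proof (bnorm_ge0 c); lra).
  exists (Rmin eta (e / K)). split. apply Rmin_glb_lt; auto. apply Rdiv_lt_0_compat; lra.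
  intros t Ht Hts.
  assert (Hts1 : Rabs (t - s) < eta) by (eapply Rlt_le_trans; [apply Hts|apply Rmin_l]).
  assert (Hts2 : Rabs (t - s) < e / K) by (eapply Rlt_le_trans; [apply Hts|apply Rmin_r]).
  destruct (Req_dec t s) as [->|Hne]. { rewrite bnorm_sub_self. lra. }
  specialize (H (t - s) ltac:(lra) Hts1 ltac:(replace (s + (t - s)) with t by ring; lra)).
  replace (s + (t - s)) with t in H by ring.
  replace (bsub (bsub (g t) (bscal t c)) (bsub (g s) (bscal s c))) with
    (badd (bsub (bsub (g t) (g s)) (bscal (t - s) (g' s))) (bscal (t - s) (bsub (g' s) c))) by vring.
  eapply Rle_lt_trans. apply bnorm_triangle. rewrite bnorm_scal.
  pose proof (bnorm_sub_le (g' s) c).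
  assert (Rabs (t - s) * K < e).
  { apply (Rmult_lt_compat_r K) in Hts2; auto. unfold Rdiv in Hts2. rewrite Rmult_assoc, Rinv_l in Hts2; lra. }
  unfold K in H1. pose proof (Rabs_pos (t - s)). nra.
Qed.

Lemma mvi_deriv a b g g' a' b' c B : deriv_on a b g g' -> a <= a' -> a' <= b' -> b' <= b ->
  (forall t, a' <= t <= b' -> bnorm (bsub (g' t) c) <= B) ->
  bnorm (bsub (bsub (g b') (g a')) (bscal (b' - a') c)) <= B * (b' - a').
Proof.
  intros Hd Ha Hab Hb HB.
  replace (bsub (bsub (g b') (g a')) (bscal (b' - a') c)) with
    (bsub (bsub (g b') (bscal b' c)) (bsub (g a') (bscal a' c))) by vring.
  apply (mvi (fun t => bsub (g t) (bscal t c))); auto.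
  - eapply deriv_ucont_lin; eauto.
  - intros s Hs e He. destruct (deriv_est a b g g' s Hd ltac:(lra) e He) as [eta [Heta H]].
    exists eta; split; auto. intros d Hd1 Hd2.
    specialize (H d ltac:(lra) ltac:(rewrite Rabs_pos_eq; lra) ltac:(lra)).
    rewrite Rabs_pos_eq in H by lra.
    replace (bsub (bsub (g (s + d)) (bscal (s + d) c)) (bsub (g s) (bscal s c))) with
      (badd (bsub (bsub (g (s + d)) (g s)) (bscal d (g' s))) (bscal d (bsub (g' s) c))) by vring.
    eapply Rle_trans. apply bnorm_triangle. rewrite bnorm_scal, Rabs_pos_eq by lra.
    specialize (HB s ltac:(lra)). nra.
Qed.

End Norm.

Section Integ.
Context {V : Type} {BV : Banach V}.

Lemma div_nonneg a b : 0 <= a -> 0 < b -> 0 <= a / b.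
Proof. intros. unfold Rdiv. apply Rmult_le_pos; auto. left; apply Rinv_0_lt_compat; auto. Qed.

Lemma nat_above x : exists N : nat, x < INR N.
Proof.
  destruct (Rlt_or_le x 0). exists 0%nat; simpl; lra.
  pose proof (archimed x) as [H1 H2].
  exists (Z.to_nat (up x)). rewrite INR_IZR_INZ, Z2Nat.id. lra.
  apply le_IZR. simpl. lra.
Qed.

Definition Rsum (g : R -> V) a b N :=
  bscal ((b - a) / INR N) (bsum N (fun i => g (a + INR i * (b - a) / INR N))).

Lemma is_RInt_alt g a b I : is_RInt g a b I <-> forall eps, eps > 0 -> exists N0, forall N, (N >= N0)%nat -> (N > 0)%nat ->
    bnorm (bsub (Rsum g a b N) I) < eps.
Proof. reflexivity. Qed.

Lemma is_RInt_unique g a b I J : is_RInt g a b I -> is_RInt g a b J -> I = J.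
Proof.
  intros H1 H2. apply bnorm_eq0_sub. apply Rle_plus_epsilon. intros e He.
  destruct (H1 (e/2) ltac:(lra)) as [N1 HN1]. destruct (H2 (e/2) ltac:(lra)) as [N2 HN2].
  specialize (HN1 (S (N1 + N2)) ltac:(lia) ltac:(lia)). specialize (HN2 (S (N1 + N2)) ltac:(lia) ltac:(lia)).
  fold (Rsum g a b (S (N1 + N2))) in *.
  pose proof (bnorm_tri3 I (Rsum g a b (S (N1 + N2))) J). rewrite bnorm_sub_sym in HN1. lra.
Qed.

Lemma RInt_eq g a b I : is_RInt g a b I -> RInt g a b = I.
Proof.
  intros H. unfold RInt. apply (is_RInt_unique g a b). apply epsilon_spec. eauto. auto.
Qed.

Lemma Rsum_pt_in a b N i : a <= b -> (N > 0)%nat -> (i < N)%nat ->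
  a <= a + INR i * (b - a) / INR N <= b.
Proof.
  intros Hab HN Hi. assert (0 < INR N) by (apply lt_0_INR; lia).
  assert (INR i + 1 <= INR N) by (rewrite <- S_INR; apply le_INR; lia).
  pose proof (pos_INR i). split.
  - assert (0 <= INR i * (b - a) / INR N) by (apply div_nonneg; nra). lra.
  - assert (INR i * (b - a) / INR N <= b - a). { apply (Rmult_le_reg_r (INR N)); auto. field_simplify; nra. }
    lra.
Qed.

Lemma is_RInt_ext g h a b I : a <= b -> (forall s, a <= s <= b -> g s = h s) -> is_RInt g a b I -> is_RInt h a b I.
Proof.
  intros Hab Hgh H e He. destruct (H e He) as [N0 HN0]. exists N0. intros N H1 H2.
  specialize (HN0 N H1 H2). fold (Rsum g a b N) in HN0. fold (Rsum h a b N).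
  replace (Rsum h a b N) with (Rsum g a b N); auto. unfold Rsum. f_equal. apply bsum_ext.
  intros. apply Hgh. apply Rsum_pt_in; auto.
Qed.

Lemma is_RInt_add g h a b I J : is_RInt g a b I -> is_RInt h a b J ->
  is_RInt (fun s => badd (g s) (h s)) a b (badd I J).
Proof.
  intros H1 H2 e He. destruct (H1 (e/2) ltac:(lra)) as [N1 HN1]. destruct (H2 (e/2) ltac:(lra)) as [N2 HN2].
  exists (N1 + N2)%nat. intros N HN HN0. specialize (HN1 N ltac:(lia) HN0). specialize (HN2 N ltac:(lia) HN0).
  fold (Rsum g a b N) in HN1. fold (Rsum h a b N) in HN2. fold (Rsum (fun s => badd (g s) (h s)) a b N).
  replace (Rsum (fun s => badd (g s) (h s)) a b N) with (badd (Rsum g a b N) (Rsum h a b N)).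
  - replace (bsub (badd (Rsum g a b N) (Rsum h a b N)) (badd I J)) with
      (badd (bsub (Rsum g a b N) I) (bsub (Rsum h a b N) J)) by vring.
    eapply Rle_lt_trans. apply bnorm_triangle. lra.
  - unfold Rsum. rewrite bsum_add_fun. rewrite bscal_distr_v. auto.
Qed.

Lemma is_RInt_scal g c a b I : is_RInt g a b I -> is_RInt (fun s => bscal c (g s)) a b (bscal c I).
Proof.
  intros H e He. destruct (H (e / (Rabs c + 1))) as [N1 HN1].
  { apply Rdiv_lt_0_compat; auto. pose proof (Rabs_pos c); lra. }
  exists N1. intros N HN HN0. specialize (HN1 N HN HN0). fold (Rsum g a b N) in HN1.
  fold (Rsum (fun s => bscal c (g s)) a b N).
  replace (Rsum (fun s => bscal c (g s)) a b N) with (bscal c (Rsum g a b N)).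
  - replace (bsub (bscal c (Rsum g a b N)) (bscal c I)) with (bscal c (bsub (Rsum g a b N) I)) by vring.
    rewrite bnorm_scal. pose proof (Rabs_pos c).
    assert (e / (Rabs c + 1) * (Rabs c + 1) = e) by (field; lra).
    pose proof (bnorm_ge0 (bsub (Rsum g a b N) I)). nra.
  - unfold Rsum. rewrite bsum_scal_fun. rewrite !bscal_assoc. f_equal. ring.
Qed.

Lemma bsum_const N (c : V) : bsum N (fun _ => c) = bscal (INR N) c.
Proof.
  induction N. simpl. rewrite bscal_0_l; auto.
  simpl bsum. rewrite IHN, S_INR, bscal_distr_s, bscal_1. auto.
Qed.

Lemma is_RInt_const c a b : is_RInt (fun _ => c) a b (bscal (b - a) c).
Proof.
  intros e He. exists 1%nat. intros N HN HN0. fold (Rsum (fun _ => c) a b N). unfold Rsum.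
  rewrite bsum_const, bscal_assoc. replace ((b - a) / INR N * INR N) with (b - a).
  rewrite bnorm_sub_self. lra. field. apply not_0_INR. lia.
Qed.

Lemma bsum_norm N F B : (forall i, (i < N)%nat -> bnorm (F i) <= B) -> bnorm (bsum N F) <= INR N * B.
Proof.
  induction N; intros H; simpl bsum. rewrite bnorm_zero. simpl. lra.
  eapply Rle_trans. apply bnorm_triangle. rewrite S_INR.
  assert (bnorm (bsum N F) <= INR N * B) by (apply IHN; intros; apply H; lia).
  specialize (H N ltac:(lia)). lra.
Qed.

Lemma Rsum_bound g a b N B : a <= b -> (N > 0)%nat -> (forall s, a <= s <= b -> bnorm (g s) <= B) ->
  bnorm (Rsum g a b N) <= (b - a) * B.
Proof.
  intros Hab HN H. unfold Rsum. rewrite bnorm_scal.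
  assert (0 < INR N) by (apply lt_0_INR; lia).
  rewrite Rabs_pos_eq by (apply div_nonneg; lra).
  assert (bnorm (bsum N (fun i => g (a + INR i * (b - a) / INR N))) <= INR N * B).
  { apply bsum_norm. intros. apply H. apply Rsum_pt_in; auto. }
  replace ((b - a) * B) with ((b - a) / INR N * (INR N * B)) by (field; lra).
  apply Rmult_le_compat_l; auto. apply div_nonneg; lra.
Qed.

Lemma is_RInt_bound g a b I B : a <= b -> is_RInt g a b I -> (forall s, a <= s <= b -> bnorm (g s) <= B) ->
  bnorm I <= (b - a) * B.
Proof.
  intros Hab H HB. apply Rle_plus_epsilon. intros e He. destruct (H e He) as [N0 HN0].
  specialize (HN0 (S N0) ltac:(lia) ltac:(lia)). fold (Rsum g a b (S N0)) in HN0.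
  pose proof (Rsum_bound g a b (S N0) B Hab ltac:(lia) HB).
  pose proof (bnorm_rev I (Rsum g a b (S N0))). rewrite bnorm_sub_sym in H1. lra.
Qed.

Lemma bsum_shift n m G : bsum (n + m) G = badd (bsum n G) (bsum m (fun l => G (n + l)%nat)).
Proof.
  induction m. simpl. rewrite Nat.add_0_r, badd_0. auto.
  rewrite Nat.add_succ_r. simpl bsum. rewrite IHm. rewrite badd_assoc. auto.
Qed.

Lemma bsum_block N M G : bsum (N * M) G = bsum N (fun i => bsum M (fun l => G (i * M + l)%nat)).
Proof.
  induction N. simpl. auto. replace (S N * M)%nat with (N * M + M)%nat by lia.
  rewrite bsum_shift, IHN. simpl. auto.
Qed.

Lemma bsum_sub N F G : bsub (bsum N F) (bsum N G) = bsum N (fun i => bsub (F i) (G i)).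
Proof.
  induction N; simpl. vring. rewrite <- IHN. vring.
Qed.

Lemma Rsum_refine g a b d e N M : a < b -> (N > 0)%nat -> (M > 0)%nat -> (b - a) / INR N <= d ->
  (forall s t, a <= s <= b -> a <= t <= b -> Rabs (s - t) <= d -> bnorm (bsub (g s) (g t)) <= e) ->
  bnorm (bsub (Rsum g a b N) (Rsum g a b (N * M))) <= (b - a) * e.
Proof.
  intros Hab HN HM Hd Hg.
  assert (HNr : 0 < INR N) by (apply lt_0_INR; lia). assert (HMr : 0 < INR M) by (apply lt_0_INR; lia).
  set (c' := (b - a) / INR (N * M)).
  assert (Hc' : 0 < c') by (unfold c'; rewrite mult_INR; apply Rdiv_lt_0_compat; nra).
  set (p := fun i => a + INR i * (b - a) / INR N).
  set (q := fun i l => a + INR (i * M + l) * (b - a) / INR (N * M)).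
  assert (E1 : Rsum g a b N = bscal c' (bsum N (fun i => bsum M (fun l => g (p i))))).
  { unfold Rsum. replace (bsum N (fun i => bsum M (fun _ => g (p i)))) with (bscal (INR M) (bsum N (fun i => g (p i)))).
    rewrite bscal_assoc. f_equal. unfold c'. rewrite mult_INR. field. lra.
    rewrite <- bsum_scal_fun. apply bsum_ext. intros. rewrite bsum_const. auto. }
  assert (E2 : Rsum g a b (N * M) = bscal c' (bsum N (fun i => bsum M (fun l => g (q i l))))).
  { unfold Rsum. rewrite bsum_block. auto. }
  rewrite E1, E2.
  replace (bsub (bscal c' (bsum N (fun i => bsum M (fun _ => g (p i)))))
              (bscal c' (bsum N (fun i => bsum M (fun l => g (q i l))))))
    with (bscal c' (bsub (bsum N (fun i => bsum M (fun _ => g (p i)))) (bsum N (fun i => bsum M (fun l => g (q i l)))))) by vring.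
  rewrite bsum_sub, bnorm_scal, Rabs_pos_eq by lra.
  assert (bnorm (bsum N (fun i => bsub (bsum M (fun _ => g (p i))) (bsum M (fun l => g (q i l))))) <= INR N * (INR M * e)).
  { apply bsum_norm. intros i Hi. rewrite bsum_sub. apply bsum_norm. intros l Hl.
    apply Hg.
    - apply Rsum_pt_in; lra || lia.
    - unfold q. replace (INR (N * M)) with (INR (N * M)) by auto. apply Rsum_pt_in; try lra; try nia.
    - unfold p, q. rewrite plus_INR, mult_INR, mult_INR.
      replace (a + INR i * (b - a) / INR N - (a + (INR i * INR M + INR l) * (b - a) / (INR N * INR M)))
        with (- (INR l * (b - a) / (INR N * INR M))) by (field; lra).
      rewrite Rabs_Ropp. assert (INR l + 1 <= INR M) by (rewrite <- S_INR; apply le_INR; lia).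
      pose proof (pos_INR l).
      rewrite Rabs_pos_eq by (apply div_nonneg; nra).
      apply Rle_trans with ((b - a) / INR N); auto.
      apply (Rmult_le_reg_r (INR N * INR M)). nra. field_simplify; try lra. nra. }
  replace ((b - a) * e) with (c' * (INR N * (INR M * e))). 2:{ unfold c'. rewrite mult_INR. field. lra. }
  apply Rmult_le_compat_l; lra.
Qed.

Lemma is_RInt_exists g a b : a < b ->
  (forall e, e > 0 -> exists d, d > 0 /\ forall s t, a <= s <= b -> a <= t <= b -> Rabs (s - t) <= d -> bnorm (bsub (g s) (g t)) <= e) ->
  exists I, is_RInt g a b I.
Proof.
  intros Hab Huc.
  assert (Hcauchy : forall e, e > 0 -> exists N0, forall N N', (N >= N0)%nat -> (N' >= N0)%nat -> (N > 0)%nat -> (N' > 0)%nat ->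
     bnorm (bsub (Rsum g a b N) (Rsum g a b N')) <= e).
  { intros e He. destruct (Huc (e / (2 * (b - a)))) as [d [Hd H]]. apply Rdiv_lt_0_compat; lra.
    destruct (nat_above ((b - a) / d)) as [N1 HN1].
    exists (S N1). intros N N' HN HN' HN0 HN'0.
    assert (Hbig : forall K, (K >= S N1)%nat -> (b - a) / INR K <= d).
    { intros K HK. assert (INR N1 <= INR K) by (apply le_INR; lia).
      assert (0 < INR K) by (apply lt_0_INR; lia).
      apply (Rmult_le_reg_r (INR K)); auto. field_simplify; try lra.
      assert ((b - a) / d * d = b - a) by (field; lra). nra. }
    pose proof (Rsum_refine g a b d (e / (2 * (b - a))) N N' Hab HN0 HN'0 (Hbig N HN) H).
    pose proof (Rsum_refine g a b d (e / (2 * (b - a))) N' N Hab HN'0 HN0 (Hbig N' HN') H).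
    rewrite Nat.mul_comm in H1. rewrite bnorm_sub_sym in H1.
    pose proof (bnorm_tri3 (Rsum g a b N) (Rsum g a b (N * N')) (Rsum g a b N')).
    assert ((b - a) * (e / (2 * (b - a))) = e / 2) by (field; lra). lra. }
  destruct (bcomplete (fun m => Rsum g a b (S m))) as [l Hl].
  { intros e He. destruct (Hcauchy (e/2) ltac:(lra)) as [N0 HN0]. exists N0. intros m n Hm Hn.
    specialize (HN0 (S m) (S n) ltac:(lia) ltac:(lia) ltac:(lia) ltac:(lia)). unfold bsub in HN0. lra. }
  exists l. intros e He. destruct (Hl e He) as [N0 HN0]. exists (S N0). intros N HN HN0'.
  specialize (HN0 (pred N) ltac:(lia)). replace (S (pred N)) with N in HN0 by lia. exact HN0.
Qed.

End Integ.

Section Semi.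
Context {X : Type} {BX : Banach X}.
Variable S : R -> X -> X.
Variable Ms : R.
Hypothesis HSlin : forall t, t >= 0 -> lin_on (fun _ => True) (S t).
Hypothesis HSbd : forall t x, t >= 0 -> bnorm (S t x) <= Ms * bnorm x.
Hypothesis HS0 : forall x, S 0 x = x.
Hypothesis HSadd : forall t s x, t >= 0 -> s >= 0 -> S (t + s) x = S t (S s x).
Hypothesis HScont : forall x, lim_in (fun t => t >= 0) (fun t => S t x) 0 x.

Lemma S_sub t x y : t >= 0 -> S t (bsub x y) = bsub (S t x) (S t y).
Proof.
  intros Ht. unfold bsub. rewrite !bopp_scal.
  destruct (HSlin t Ht x (bscal (-1) y) 0 I I) as [H1 _]. rewrite H1.
  destruct (HSlin t Ht y y (-1) I I) as [_ H2]. rewrite H2. auto.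
Qed.

Lemma S_add t x y : t >= 0 -> S t (badd x y) = badd (S t x) (S t y).
Proof. intros Ht. destruct (HSlin t Ht x y 0 I I) as [H1 _]. auto. Qed.

Lemma S_scal t c x : t >= 0 -> S t (bscal c x) = bscal c (S t x).
Proof. intros Ht. destruct (HSlin t Ht x x c I I) as [_ H2]. auto. Qed.

Lemma Ms_abs t x : t >= 0 -> bnorm (S t x) <= Rabs Ms * bnorm x.
Proof.
  intros Ht. eapply Rle_trans. apply HSbd; auto. apply Rmult_le_compat_r. apply bnorm_ge0. apply Rle_abs.
Qed.

Lemma S_uc w k : forall e, e > 0 -> exists d, d > 0 /\ forall s t, 0 <= s <= k -> 0 <= t <= k ->
  Rabs (s - t) <= d -> bnorm (bsub (S s w) (S t w)) <= e.
Proof.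
  intros e He.
  destruct (HScont w (e / (Rabs Ms + 1))) as [eta [Heta H]].
  { apply Rdiv_lt_0_compat; auto. pose proof (Rabs_pos Ms). lra. }
  exists (eta / 2). split. lra.
  assert (Key : forall s t, 0 <= s -> s <= t -> t - s < eta -> bnorm (bsub (S t w) (S s w)) <= e).
  { intros s t Hs Hst Hts. destruct (Req_dec s t) as [->|Hne]. rewrite bnorm_sub_self; lra.
    replace (S t w) with (S s (S (t - s) w)) by (rewrite <- HSadd by lra; f_equal; ring).
    rewrite <- S_sub by lra. eapply Rle_trans. apply Ms_abs. lra.
    specialize (H (t - s) ltac:(lra) ltac:(lra) ltac:(rewrite Rminus_0_r, Rabs_pos_eq; lra)).
    pose proof (Rabs_pos Ms).
    assert (e / (Rabs Ms + 1) * (Rabs Ms + 1) = e) by (field; lra).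
    pose proof (bnorm_ge0 (bsub (S (t - s) w) w)). nra. }
  intros s t Hs Ht Hst. destruct (Rle_or_lt s t).
  - rewrite bnorm_sub_sym. apply Key; try lra. rewrite Rabs_left1 in Hst; lra.
  - apply Key; try lra. rewrite Rabs_pos_eq in Hst; lra.
Qed.

Lemma orbit_int_exists w k : k > 0 -> exists I, is_RInt (fun s => S s w) 0 k I.
Proof. intros Hk. apply is_RInt_exists. lra. intros e He. apply (S_uc w k e He). Qed.

Lemma bsum_telescope N (G : nat -> X) : bsum N (fun i => bsub (G (Datatypes.S i)) (G i)) = bsub (G N) (G O).
Proof. induction N; simpl. vring. rewrite IHN. vring. Qed.

Lemma gen_int z Az k : k > 0 ->
  lim_in (fun h => h > 0) (fun h => bscal (/ h) (bsub (S h z) z)) 0 Az ->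
  is_RInt (fun s => S s Az) 0 k (bsub (S k z) z).
Proof.
  intros Hk Hgen e He.
  destruct (Hgen (e / (k * Rabs Ms + 1))) as [eta [Heta H]].
  { apply Rdiv_lt_0_compat; auto. pose proof (Rabs_pos Ms). nra. }
  destruct (nat_above (k / eta)) as [N0 HN0].
  exists (Datatypes.S N0). intros N HN HNp. fold (Rsum (fun s => S s Az) 0 k N).
  assert (HNr : 0 < INR N) by (apply lt_0_INR; lia).
  set (h := k / INR N).
  assert (Hh : 0 < h) by (unfold h; apply Rdiv_lt_0_compat; lra).
  assert (Hheta : h < eta).
  { unfold h. assert (INR N0 <= INR N) by (apply le_INR; lia).
    apply (Rmult_lt_reg_r (INR N)); auto. field_simplify; try lra.
    assert (k / eta * eta = k) by (field; lra). nra. }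
  set (G := fun i => S (INR i * h) z).
  assert (HGN : G N = S k z) by (unfold G, h; f_equal; field; lra).
  assert (HG0 : G O = z) by (unfold G; simpl; rewrite Rmult_0_l; auto).
  assert (HGs : forall i, bsub (G (Datatypes.S i)) (G i) = S (INR i * h) (bsub (S h z) z)).
  { intros i. unfold G. rewrite S_INR. replace ((INR i + 1) * h) with (INR i * h + h) by ring.
    assert (0 <= INR i * h) by (pose proof (pos_INR i); nra).
    rewrite HSadd by lra. rewrite S_sub by lra. auto. }
  replace (bsub (S k z) z) with (bsub (G N) (G O)) by (rewrite HGN, HG0; auto). rewrite <- bsum_telescope.
  unfold Rsum.
  replace ((k - 0) / INR N) with h by (unfold h; rewrite Rminus_0_r; reflexivity).
  rewrite (bsum_ext N (fun i => S (0 + INR i * (k - 0) / INR N) Az) (fun i => S (INR i * h) Az))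
    by (intros; f_equal; unfold h; field; lra).
  rewrite (bsum_ext N (fun i => bsub (G (Datatypes.S i)) (G i)) (fun i => S (INR i * h) (bsub (S h z) z)))
    by (intros; apply HGs).
  rewrite <- bsum_scal_fun, bsum_sub.
  set (r := bsub (bscal (/ h) (bsub (S h z) z)) Az).
  specialize (H h ltac:(lra) ltac:(lra) ltac:(rewrite Rminus_0_r, Rabs_pos_eq; lra)). fold r in H.
  assert (Hr : forall i, bsub (bscal h (S (INR i * h) Az)) (S (INR i * h) (bsub (S h z) z)) =
                         bscal (- h) (S (INR i * h) r)).
  { intros i. assert (0 <= INR i * h) by (pose proof (pos_INR i); nra).
    unfold r. rewrite (S_sub (INR i * h) (bscal (/ h) (bsub (S h z) z)) Az), S_scal by lra.
    transitivity (bsub (bscal h (S (INR i * h) Az)) (bscal (h * / h) (S (INR i * h) (bsub (S h z) z)))).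
    rewrite Rinv_r by lra. rewrite bscal_1. auto. vring. }
  rewrite (bsum_ext _ _ _ (fun i _ => Hr i)).
  eapply Rle_lt_trans. apply (bsum_norm _ _ (h * (Rabs Ms * bnorm r))).
  { intros i Hi. rewrite bnorm_scal, Rabs_Ropp, Rabs_pos_eq by lra. apply Rmult_le_compat_l. lra.
    apply Ms_abs. pose proof (pos_INR i); nra. }
  replace (INR N * (h * (Rabs Ms * bnorm r))) with (k * Rabs Ms * bnorm r) by (unfold h; field; lra).
  pose proof (Rabs_pos Ms). pose proof (bnorm_ge0 r).
  assert (e / (k * Rabs Ms + 1) * (k * Rabs Ms + 1) = e) by (field; nra).
  nra.
Qed.

Lemma S_diff_bound z Az s : s >= 0 ->
  lim_in (fun h => h > 0) (fun h => bscal (/ h) (bsub (S h z) z)) 0 Az ->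
  bnorm (bsub (S s z) z) <= s * (Rabs Ms * bnorm Az).
Proof.
  intros Hs Hgen. destruct (Req_dec s 0) as [->|Hne].
  { rewrite HS0, bnorm_sub_self. lra. }
  pose proof (gen_int z Az s ltac:(lra) Hgen).
  assert (B := is_RInt_bound (fun t => S t Az) 0 s _ (Rabs Ms * bnorm Az) ltac:(lra) H
     ltac:(intros t Ht; apply Ms_abs; lra)).
  rewrite Rminus_0_r in B. exact B.
Qed.

End Semi.

Section Lip.
Context {V : Type} {BV : Banach V}.
Lemma lip_ucont (g : R -> V) a b K :
  (forall s t, a <= s -> s <= t -> t <= b -> bnorm (bsub (g t) (g s)) <= K * (t - s)) -> ucont a b g.
Proof.
  intros H s Hs e He. exists (e / (Rabs K + 1)). split.
  { apply Rdiv_lt_0_compat; auto. pose proof (Rabs_pos K); lra. }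
  intros t Ht Hts. assert (HK := Rabs_pos K).
  assert (Hq : e / (Rabs K + 1) * (Rabs K + 1) = e) by (field; lra).
  destruct (Rle_or_lt s t).
  - specialize (H s t ltac:(lra) ltac:(lra) ltac:(lra)). rewrite Rabs_pos_eq in Hts by lra.
    assert (K * (t - s) <= Rabs K * (t - s)) by (apply Rmult_le_compat_r; [lra|apply Rle_abs]). nra.
  - specialize (H t s ltac:(lra) ltac:(lra) ltac:(lra)). rewrite Rabs_left in Hts by lra.
    rewrite bnorm_sub_sym.
    assert (K * (s - t) <= Rabs K * (s - t)) by (apply Rmult_le_compat_r; [lra|apply Rle_abs]). nra.
Qed.
End Lip.

Section EulerStep.
Context {V : Type} {BV : Banach V}.
Variable F : R -> V -> V.
Variables (x0 : V) (h rho M L d : R).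
Hypothesis Hd : d > 0.
Hypothesis HM : 0 <= M.
Hypothesis HL : 0 <= L.
Hypothesis HhM : h * M <= rho.
Hypothesis HFb : forall s x, 0 <= s <= h -> bnorm (bsub x x0) <= rho -> bnorm (F s x) <= M.
Hypothesis HFL : forall s1 x1 s2 x2, 0 <= s1 <= h -> bnorm (bsub x1 x0) <= rho ->
   0 <= s2 <= h -> bnorm (bsub x2 x0) <= rho ->
   bnorm (bsub (F s1 x1) (F s2 x2)) <= L * (Rabs (s1 - s2) + bnorm (bsub x1 x2)).

Fixpoint eul (m : nat) (s0 : R) (y : V) (s : R) : V :=
  match m with
  | O => badd y (bscal (s - s0) (F s0 y))
  | Datatypes.S m' => if Rle_dec s (s0 + d) then badd y (bscal (s - s0) (F s0 y))
             else eul m' (s0 + d) (badd y (bscal d (F s0 y))) s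
  end.

Definition Inv m s0 y := 0 <= s0 /\ s0 + INR (Datatypes.S m) * d = h /\ bnorm (bsub y x0) <= s0 * M.

Lemma Inv_h m s0 y : Inv m s0 y -> s0 + d <= h.
Proof. intros [H1 [H2 H3]]. rewrite S_INR in H2. pose proof (pos_INR m). nra. Qed.

Lemma Inv_F m s0 y : Inv m s0 y -> bnorm (F s0 y) <= M.
Proof.
  intros Hi. pose proof (Inv_h _ _ _ Hi). destruct Hi as [H1 [H2 H3]].
  apply HFb. lra. assert (s0 * M <= h * M) by (apply Rmult_le_compat_r; lra). lra.
Qed.

Lemma Inv_next m s0 y : Inv (Datatypes.S m) s0 y -> Inv m (s0 + d) (badd y (bscal d (F s0 y))).
Proof.
  intros Hi. pose proof (Inv_F _ _ _ Hi). destruct Hi as [H1 [H2 H3]]. split; [lra|split].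
  - rewrite S_INR in H2 |- *. rewrite S_INR in H2. lra.
  - replace (bsub (badd y (bscal d (F s0 y))) x0) with (badd (bsub y x0) (bscal d (F s0 y))) by vring.
    eapply Rle_trans. apply bnorm_triangle. rewrite bnorm_scal, Rabs_pos_eq by lra. nra.
Qed.

Lemma eul_start m s0 y : eul m s0 y s0 = y.
Proof.
  destruct m; simpl. rewrite Rminus_diag, bscal_0_l, badd_0; auto.
  destruct (Rle_dec s0 (s0 + d)). rewrite Rminus_diag, bscal_0_l, badd_0; auto. lra.
Qed.

Lemma eul_next m s0 y t : t >= s0 + d ->
  eul (Datatypes.S m) s0 y t = eul m (s0 + d) (badd y (bscal d (F s0 y))) t.
Proof.
  intros Ht. simpl. destruct (Rle_dec t (s0 + d)); auto.
  replace t with (s0 + d) by lra. rewrite eul_start. f_equal. f_equal. ring.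
Qed.

Lemma eul_piece m s0 y t : (m = O \/ t <= s0 + d) -> eul m s0 y t = badd y (bscal (t - s0) (F s0 y)).
Proof.
  intros [->|Ht]. reflexivity. destruct m. reflexivity. simpl. destruct (Rle_dec t (s0 + d)); auto. lra.
Qed.

Lemma eul_lip m : forall s0 y, Inv m s0 y -> forall s t, s0 <= s -> s <= t -> t <= h ->
  bnorm (bsub (eul m s0 y t) (eul m s0 y s)) <= M * (t - s).
Proof.
  induction m as [|m IH]; intros s0 y Hi s t Hs Hst Hth; pose proof (Inv_F _ _ _ Hi) as HF.
  - rewrite !eul_piece by auto.
    replace (bsub (badd y (bscal (t - s0) (F s0 y))) (badd y (bscal (s - s0) (F s0 y)))) with
      (bscal (t - s) (F s0 y)) by vring. rewrite bnorm_scal, Rabs_pos_eq by lra. nra.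
  - destruct (Rle_or_lt t (s0 + d)).
    + rewrite !eul_piece by (right; lra).
      replace (bsub (badd y (bscal (t - s0) (F s0 y))) (badd y (bscal (s - s0) (F s0 y)))) with
        (bscal (t - s) (F s0 y)) by vring. rewrite bnorm_scal, Rabs_pos_eq by lra. nra.
    + pose proof (Inv_next _ _ _ Hi) as Hi'.
      destruct (Rle_or_lt (s0 + d) s).
      * rewrite !eul_next by lra. apply IH; auto.
      * rewrite (eul_next m s0 y t) by lra. rewrite (eul_piece _ s0 y s) by (right; lra).
        set (y' := badd y (bscal d (F s0 y))).
        pose proof (IH (s0 + d) y' Hi' (s0 + d) t ltac:(lra) ltac:(lra) Hth) as H1.
        rewrite eul_start in H1.
        pose proof (bnorm_tri3 (eul m (s0 + d) y' t) y' (badd y (bscal (s - s0) (F s0 y)))).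
        replace (bsub y' (badd y (bscal (s - s0) (F s0 y)))) with (bscal (s0 + d - s) (F s0 y)) in H2
          by (unfold y'; vring).
        rewrite bnorm_scal, Rabs_pos_eq in H2 by lra. nra.
Qed.

Lemma eul_ball m s0 y s : Inv m s0 y -> s0 <= s <= h -> bnorm (bsub (eul m s0 y s) x0) <= s * M.
Proof.
  intros Hi Hs. pose proof (eul_lip m s0 y Hi s0 s ltac:(lra) ltac:(lra) ltac:(lra)).
  rewrite eul_start in H. destruct Hi as [_ [_ H3]].
  pose proof (bnorm_tri3 (eul m s0 y s) y x0). nra.
Qed.

Lemma eul_dini m : forall s0 y, Inv m s0 y -> forall s, s0 <= s < h ->
  exists eta, eta > 0 /\ forall dl, 0 < dl < eta -> s + dl <= h ->
   bnorm (bsub (bsub (eul m s0 y (s + dl)) (eul m s0 y s)) (bscal dl (F s (eul m s0 y s))))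
     <= dl * (L * d * (1 + M)).
Proof.
  induction m as [|m IH]; intros s0 y Hi s Hs.
  - assert (Hsd : s < s0 + d).
    { destruct Hi as [_ [H2 _]]. simpl in H2. lra. }
    exists (s0 + d - s). split. lra. intros dl Hdl Hdh.
    assert (s0 + d <= h) by (eapply Inv_h; eauto).
    rewrite !eul_piece by auto.
    pose proof (Inv_F _ _ _ Hi) as HF.
    assert (Hb := eul_ball _ _ _ s Hi ltac:(lra)). rewrite eul_piece in Hb by auto.
    replace (bsub (bsub (badd y (bscal (s + dl - s0) (F s0 y))) (badd y (bscal (s - s0) (F s0 y))))
               (bscal dl (F s (badd y (bscal (s - s0) (F s0 y))))))
      with (bscal dl (bsub (F s0 y) (F s (badd y (bscal (s - s0) (F s0 y)))))) by vring.
    rewrite bnorm_scal, Rabs_pos_eq by lra. apply Rmult_le_compat_l. lra.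
    destruct Hi as [H1 [H2 H3]].
    eapply Rle_trans. apply HFL; try lra.
    { assert (s0 * M <= h * M) by (apply Rmult_le_compat_r; lra). lra. }
    { assert (s * M <= h * M) by (apply Rmult_le_compat_r; lra). lra. }
    replace (bsub y (badd y (bscal (s - s0) (F s0 y)))) with (bscal (-(s - s0)) (F s0 y)) by vring.
    rewrite bnorm_scal, Rabs_Ropp, (Rabs_pos_eq (s - s0)) by lra. rewrite (Rabs_left1 (s0 - s)) by lra.
    assert ((s - s0) * bnorm (F s0 y) <= d * M). { apply Rmult_le_compat; try lra. apply bnorm_ge0. }
    nra.
  - destruct (Rlt_or_le s (s0 + d)) as [Hsd|Hsd].
    + exists (s0 + d - s). split. lra. intros dl Hdl Hdh.
      assert (s0 + d <= h) by (eapply Inv_h; eauto).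
      rewrite !eul_piece by (right; lra).
      pose proof (Inv_F _ _ _ Hi) as HF.
      assert (Hb := eul_ball _ _ _ s Hi ltac:(lra)). rewrite eul_piece in Hb by (right; lra).
      replace (bsub (bsub (badd y (bscal (s + dl - s0) (F s0 y))) (badd y (bscal (s - s0) (F s0 y))))
                 (bscal dl (F s (badd y (bscal (s - s0) (F s0 y))))))
        with (bscal dl (bsub (F s0 y) (F s (badd y (bscal (s - s0) (F s0 y)))))) by vring.
      rewrite bnorm_scal, Rabs_pos_eq by lra. apply Rmult_le_compat_l. lra.
      destruct Hi as [H1 [H2 H3]].
      eapply Rle_trans. apply HFL; try lra.
      { assert (s0 * M <= h * M) by (apply Rmult_le_compat_r; lra). lra. }
      { assert (s * M <= h * M) by (apply Rmult_le_compat_r; lra). lra. }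
      replace (bsub y (badd y (bscal (s - s0) (F s0 y)))) with (bscal (-(s - s0)) (F s0 y)) by vring.
      rewrite bnorm_scal, Rabs_Ropp, (Rabs_pos_eq (s - s0)) by lra. rewrite (Rabs_left1 (s0 - s)) by lra.
      assert ((s - s0) * bnorm (F s0 y) <= d * M). { apply Rmult_le_compat; try lra. apply bnorm_ge0. }
      nra.
    + destruct (IH _ _ (Inv_next _ _ _ Hi) s ltac:(lra)) as [eta [Heta H]].
      exists eta. split; auto. intros dl Hdl Hdh. rewrite !eul_next by lra. apply H; auto.
Qed.

End EulerStep.

Section Conv.
Context {V : Type} {BV : Banach V}.
Variable F : R -> V -> V.
Variables (x0 : V) (h rho M L : R).
Hypothesis Hh : h > 0.
Hypothesis HM : 0 <= M.
Hypothesis HL : 0 <= L.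
Hypothesis HhM : h * M <= rho.
Hypothesis HhL : h * L <= 1/2.
Hypothesis HFb : forall s x, 0 <= s <= h -> bnorm (bsub x x0) <= rho -> bnorm (F s x) <= M.
Hypothesis HFL : forall s1 x1 s2 x2, 0 <= s1 <= h -> bnorm (bsub x1 x0) <= rho ->
   0 <= s2 <= h -> bnorm (bsub x2 x0) <= rho ->
   bnorm (bsub (F s1 x1) (F s2 x2)) <= L * (Rabs (s1 - s2) + bnorm (bsub x1 x2)).

Definition dm m := h / INR (Datatypes.S m).
Lemma dm_pos m : dm m > 0.
Proof. unfold dm. apply Rdiv_lt_0_compat; auto. apply lt_0_INR; lia. Qed.
Lemma Inv0 m : Inv x0 h M (dm m) m 0 x0.
Proof.
  split; [lra|split]. unfold dm. field. apply not_0_INR; lia.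
  rewrite bnorm_sub_self. lra.
Qed.
Definition phi m s := eul F (dm m) m 0 x0 s.
Definition em m := L * dm m * (1 + M).
Lemma em_ge0 m : 0 <= em m.
Proof. unfold em. pose proof (dm_pos m). apply Rmult_le_pos; [apply Rmult_le_pos|]; lra. Qed.

Lemma ball_ok s : 0 <= s <= h -> s * M <= rho.
Proof. intros. assert (s * M <= h * M) by (apply Rmult_le_compat_r; lra). lra. Qed.

Lemma phi_lip m s t : 0 <= s -> s <= t -> t <= h -> bnorm (bsub (phi m t) (phi m s)) <= M * (t - s).
Proof. intros. unfold phi. eapply eul_lip; eauto; try apply dm_pos; try apply Inv0. Qed.
Lemma phi_ball m s : 0 <= s <= h -> bnorm (bsub (phi m s) x0) <= s * M.
Proof. intros. unfold phi. eapply eul_ball; eauto; try apply dm_pos; try apply Inv0; lra. Qed.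
Lemma phi_0 m : phi m 0 = x0.
Proof. unfold phi. apply eul_start. apply dm_pos. Qed.
Lemma phi_dini m s : 0 <= s < h ->
  exists eta, eta > 0 /\ forall dl, 0 < dl < eta -> s + dl <= h ->
   bnorm (bsub (bsub (phi m (s + dl)) (phi m s)) (bscal dl (F s (phi m s)))) <= dl * em m.
Proof. intros. unfold phi, em. eapply eul_dini; eauto; try apply dm_pos; try apply Inv0; lra. Qed.

Lemma phi_cauchy m n s : 0 <= s <= h -> bnorm (bsub (phi m s) (phi n s)) <= 2 * h * (em m + em n).
Proof.
  intros Hs.
  set (E := fun r => exists s, 0 <= s <= h /\ r = bnorm (bsub (phi m s) (phi n s))).
  assert (HEb : bound E).
  { exists (2 * rho). intros r [s' [Hs' ->]].
    pose proof (phi_ball m s' Hs'). pose proof (phi_ball n s' Hs'). pose proof (ball_ok s' Hs').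
    pose proof (bnorm_tri3 (phi m s') x0 (phi n s')). rewrite (bnorm_sub_sym x0) in H2. lra. }
  destruct (completeness E HEb (ex_intro _ _ (ex_intro _ 0 (conj (conj (Rle_refl 0) (Rlt_le _ _ Hh)) eq_refl)))) as [Es [Hub Hlub]].
  assert (HEs0 : 0 <= Es).
  { apply Hub. exists 0. split. lra. rewrite !phi_0, bnorm_sub_self. auto. }
  set (B := em m + em n + L * Es).
  assert (HB0 : 0 <= B) by (unfold B; pose proof (em_ge0 m); pose proof (em_ge0 n); nra).
  assert (Key : forall s, 0 <= s <= h -> bnorm (bsub (phi m s) (phi n s)) <= B * s).
  { intros s' Hs'.
    pose proof (mvi_core (fun t => bsub (phi m t) (phi n t)) 0 s' B ltac:(lra)) as HM0.
    simpl in HM0. rewrite !phi_0 in HM0.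
    replace (bsub (bsub (phi m s') (phi n s')) (bsub x0 x0)) with (bsub (phi m s') (phi n s')) in HM0 by vring.
    replace (B * s') with (B * (s' - 0)) by ring. apply HM0.
    - apply (lip_ucont _ _ _ (2 * M)). intros a b Ha Hab Hb.
      replace (bsub (bsub (phi m b) (phi n b)) (bsub (phi m a) (phi n a))) with
        (bsub (bsub (phi m b) (phi m a)) (bsub (phi n b) (phi n a))) by vring.
      eapply Rle_trans. apply bnorm_sub_le.
      pose proof (phi_lip m a b Ha Hab ltac:(lra)). pose proof (phi_lip n a b Ha Hab ltac:(lra)). lra.
    - intros t Ht. destruct (phi_dini m t ltac:(lra)) as [e1 [He1 H1]].
      destruct (phi_dini n t ltac:(lra)) as [e2 [He2 H2]].
      exists (Rmin e1 e2). split. apply Rmin_glb_lt; auto. intros dl Hdl Hdh.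
      assert (dl < e1) by (eapply Rlt_le_trans; [apply Hdl|apply Rmin_l]).
      assert (dl < e2) by (eapply Rlt_le_trans; [apply Hdl|apply Rmin_r]).
      specialize (H1 dl ltac:(lra) ltac:(lra)). specialize (H2 dl ltac:(lra) ltac:(lra)).
      replace (bsub (bsub (phi m (t + dl)) (phi n (t + dl))) (bsub (phi m t) (phi n t))) with
        (badd (bsub (bsub (bsub (phi m (t + dl)) (phi m t)) (bscal dl (F t (phi m t))))
                    (bsub (bsub (phi n (t + dl)) (phi n t)) (bscal dl (F t (phi n t)))))
              (bscal dl (bsub (F t (phi m t)) (F t (phi n t))))) by vring.
      eapply Rle_trans. apply bnorm_triangle. eapply Rle_trans. apply Rplus_le_compat_r. apply bnorm_sub_le.
      rewrite bnorm_scal, Rabs_pos_eq by lra.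
      assert (bnorm (bsub (F t (phi m t)) (F t (phi n t))) <= L * Es).
      { eapply Rle_trans. apply HFL; try lra.
        pose proof (phi_ball m t ltac:(lra)). pose proof (ball_ok t ltac:(lra)). lra.
        pose proof (phi_ball n t ltac:(lra)). pose proof (ball_ok t ltac:(lra)). lra.
        rewrite Rminus_diag, Rabs_R0, Rplus_0_l. apply Rmult_le_compat_l; auto. apply Hub. exists t. split; auto. lra. }
      unfold B. nra. }
  assert (HEs : Es <= h * B).
  { apply Hlub. intros r [s' [Hs' ->]]. pose proof (Key s' Hs'). nra. }
  assert (Es <= 2 * h * (em m + em n)) by (unfold B in HEs; nra).
  assert (bnorm (bsub (phi m s) (phi n s)) <= Es) by (apply Hub; exists s; auto). lra.
Qed.

Lemma em_small e : e > 0 -> exists N, forall m, (m >= N)%nat -> em m <= e.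
Proof.
  intros He. destruct (nat_above (L * h * (1 + M) / e)) as [N HN]. exists N. intros m Hm.
  unfold em, dm. assert (INR N <= INR m) by (apply le_INR; lia). rewrite S_INR.
  assert (0 < INR m + 1) by (pose proof (pos_INR m); lra).
  replace (L * (h / (INR m + 1)) * (1 + M)) with (L * h * (1 + M) / (INR m + 1)) by (field; lra).
  apply (Rmult_le_reg_r (INR m + 1)); auto. field_simplify; try lra.
  assert (L * h * (1 + M) / e * e = L * h * (1 + M)) by (field; lra). nra.
Qed.

Definition phiL s := epsilon (inhabits x0) (fun l => forall e, e > 0 -> exists N, forall m, (m >= N)%nat -> bnorm (bsub (phi m s) l) < e).

Lemma phiL_lim s : 0 <= s <= h -> forall e, e > 0 -> exists N, forall m, (m >= N)%nat -> bnorm (bsub (phi m s) (phiL s)) < e.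
Proof.
  intros Hs. unfold phiL. apply epsilon_spec.
  destruct (bcomplete (fun m => phi m s)) as [l Hl].
  { intros e He. destruct (em_small (e / (8 * h))) as [N HN]. apply Rdiv_lt_0_compat; lra.
    exists N. intros m n Hm Hn. pose proof (phi_cauchy m n s Hs). pose proof (HN m Hm). pose proof (HN n Hn).
    assert (2 * h * (em m + em n) <= e / 2).
    { assert (2 * h * (e / (8 * h) + e / (8 * h)) = e / 2) by (field; lra). nra. }
    unfold bsub in H. lra. }
  exists l. auto.
Qed.

Lemma phiL_approx m s : 0 <= s <= h -> bnorm (bsub (phi m s) (phiL s)) <= 2 * h * em m.
Proof.
  intros Hs. apply Rle_plus_epsilon. intros e He.
  destruct (phiL_lim s Hs (e / 2) ltac:(lra)) as [N1 HN1].
  destruct (em_small (e / (4 * h))) as [N2 HN2]. apply Rdiv_lt_0_compat; lra.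
  specialize (HN1 (N1 + N2)%nat ltac:(lia)). specialize (HN2 (N1 + N2)%nat ltac:(lia)).
  pose proof (phi_cauchy m (N1 + N2) s Hs).
  pose proof (bnorm_tri3 (phi m s) (phi (N1 + N2) s) (phiL s)).
  assert (2 * h * (e / (4 * h)) = e / 2) by (field; lra). nra.
Qed.

Lemma lim_zero_le a c : (forall m, a <= c * em m) -> 0 <= c -> a <= 0.
Proof.
  intros H Hc. apply Rle_plus_epsilon. intros e He. rewrite Rplus_0_l.
  destruct (em_small (e / (c + 1))) as [N HN]. apply Rdiv_lt_0_compat; lra.
  specialize (H N). specialize (HN N ltac:(lia)). pose proof (em_ge0 N).
  assert (c * (e / (c + 1)) <= e). { apply (Rmult_le_reg_r (c + 1)). lra. field_simplify; nra. }
  nra.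
Qed.

Lemma phiL_0 : phiL 0 = x0.
Proof.
  apply bnorm_eq0_sub. apply (lim_zero_le _ (2 * h)); [|lra]. intros m.
  pose proof (phiL_approx m 0 ltac:(lra)). rewrite phi_0 in H. rewrite bnorm_sub_sym. lra.
Qed.

Lemma phiL_lip s t : 0 <= s -> s <= t -> t <= h -> bnorm (bsub (phiL t) (phiL s)) <= M * (t - s).
Proof.
  intros. assert (bnorm (bsub (phiL t) (phiL s)) - M * (t - s) <= 0); [|lra].
  apply (lim_zero_le _ (4 * h)); [|lra]. intros m.
  pose proof (phiL_approx m t ltac:(lra)). pose proof (phiL_approx m s ltac:(lra)).
  pose proof (phi_lip m s t H H0 H1).
  replace (bsub (phiL t) (phiL s)) with (badd (bsub (phiL t) (phi m t)) (badd (bsub (phi m t) (phi m s)) (bsub (phi m s) (phiL s)))) by vring.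
  pose proof (bnorm_triangle (bsub (phiL t) (phi m t)) (badd (bsub (phi m t) (phi m s)) (bsub (phi m s) (phiL s)))).
  pose proof (bnorm_triangle (bsub (phi m t) (phi m s)) (bsub (phi m s) (phiL s))).
  rewrite bnorm_sub_sym in H2. lra.
Qed.

Lemma phiL_ball s : 0 <= s <= h -> bnorm (bsub (phiL s) x0) <= s * M.
Proof. intros. pose proof (phiL_lip 0 s ltac:(lra) ltac:(lra) ltac:(lra)). rewrite phiL_0 in H0. lra. Qed.

Lemma phiL_anchor a b s : 0 <= a -> a <= s -> s <= b -> b <= h ->
  bnorm (bsub (bsub (phiL b) (phiL a)) (bscal (b - a) (F s (phiL s)))) <= L * (1 + M) * (b - a) ^ 2.
Proof.
  intros Ha Has Hsb Hb. set (w := b - a). set (c := F s (phiL s)).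
  assert (bnorm (bsub (bsub (phiL b) (phiL a)) (bscal w c)) - L * (1 + M) * w ^ 2 <= 0); [|lra].
  apply (lim_zero_le _ (w + 2 * h * L * w + 4 * h)); [|unfold w; nra]. intros m.
  set (Bm := em m + L * (w + 2 * h * em m + M * w)).
  assert (HG : bnorm (bsub (bsub (phi m b) (bscal b c)) (bsub (phi m a) (bscal a c))) <= Bm * (b - a)).
  { apply (mvi_core (fun t => bsub (phi m t) (bscal t c))). lra.
    - apply (lip_ucont _ _ _ (M + bnorm c)). intros x y Hx Hxy Hy.
      replace (bsub (bsub (phi m y) (bscal y c)) (bsub (phi m x) (bscal x c))) with
        (bsub (bsub (phi m y) (phi m x)) (bscal (y - x) c)) by vring.
      eapply Rle_trans. apply bnorm_sub_le. rewrite bnorm_scal, Rabs_pos_eq by lra.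
      pose proof (phi_lip m x y ltac:(lra) Hxy ltac:(lra)). lra.
    - intros t Ht. destruct (phi_dini m t ltac:(lra)) as [e1 [He1 H1]].
      exists e1. split; auto. intros dl Hdl Hdb. specialize (H1 dl Hdl ltac:(lra)).
      replace (bsub (bsub (phi m (t + dl)) (bscal (t + dl) c)) (bsub (phi m t) (bscal t c))) with
        (badd (bsub (bsub (phi m (t + dl)) (phi m t)) (bscal dl (F t (phi m t)))) (bscal dl (bsub (F t (phi m t)) c))) by vring.
      eapply Rle_trans. apply bnorm_triangle. rewrite bnorm_scal, Rabs_pos_eq by lra.
      assert (bnorm (bsub (F t (phi m t)) c) <= L * (w + 2 * h * em m + M * w)).
      { unfold c. eapply Rle_trans. apply HFL; try lra.
        pose proof (phi_ball m t ltac:(lra)). pose proof (ball_ok t ltac:(lra)). lra.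
        pose proof (phiL_ball s ltac:(lra)). pose proof (ball_ok s ltac:(lra)). lra.
        apply Rmult_le_compat_l; auto.
        assert (Rabs (t - s) <= w) by (unfold w; apply Rabs_le; lra).
        pose proof (bnorm_tri3 (phi m t) (phiL t) (phiL s)).
        pose proof (phiL_approx m t ltac:(lra)).
        destruct (Rle_or_lt t s).
        - pose proof (phiL_lip t s ltac:(lra) H3 ltac:(lra)). rewrite bnorm_sub_sym in H4.
          assert (M * (s - t) <= M * w) by (apply Rmult_le_compat_l; unfold w; lra). lra.
        - pose proof (phiL_lip s t ltac:(lra) ltac:(lra) ltac:(lra)).
          assert (M * (t - s) <= M * w) by (apply Rmult_le_compat_l; unfold w; lra). lra. }
      unfold Bm. nra. }
  fold w in HG.
  replace (bsub (bsub (phi m b) (bscal b c)) (bsub (phi m a) (bscal a c))) with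
    (bsub (bsub (phi m b) (phi m a)) (bscal w c)) in HG by (unfold w; vring).
  replace (bsub (bsub (phiL b) (phiL a)) (bscal w c)) with
    (badd (bsub (bsub (phi m b) (phi m a)) (bscal w c)) (badd (bsub (phiL b) (phi m b)) (bsub (phi m a) (phiL a)))) by vring.
  pose proof (bnorm_triangle (bsub (bsub (phi m b) (phi m a)) (bscal w c)) (badd (bsub (phiL b) (phi m b)) (bsub (phi m a) (phiL a)))).
  pose proof (bnorm_triangle (bsub (phiL b) (phi m b)) (bsub (phi m a) (phiL a))).
  pose proof (phiL_approx m b ltac:(lra)). pose proof (phiL_approx m a ltac:(lra)).
  rewrite bnorm_sub_sym in H1. unfold Bm in HG.
  assert (Hw : 0 <= w) by (unfold w; lra). pose proof (em_ge0 m).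
  replace (Bm * w) with ((em m + L * (w + 2 * h * em m + M * w)) * w) in HG by auto.
  nra.
Qed.

Lemma ode_exists : exists phi0 : R -> V, phi0 0 = x0 /\ deriv_on 0 h phi0 (fun s => F s (phi0 s)) /\
  (forall s, 0 <= s <= h -> bnorm (bsub (bsub (phi0 s) x0) (bscal s (F 0 x0))) <= L * (1 + M) * s ^ 2).
Proof.
  exists phiL. split; [apply phiL_0|split].
  - intros t Ht e He. set (K := L * (1 + M)).
    assert (HK : 0 <= K) by (unfold K; nra).
    exists (e / (K + 1)). split. apply Rdiv_lt_0_compat; lra.
    intros dl Hdom Hne Hdl. rewrite Rminus_0_r in Hdl.
    assert (Hq : e / (K + 1) * (K + 1) = e) by (field; lra).
    set (c := F t (phiL t)).
    assert (E : bsub (bscal (/ dl) (bsub (phiL (t + dl)) (phiL t))) c =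
                bscal (/ dl) (bsub (bsub (phiL (t + dl)) (phiL t)) (bscal dl c))).
    { transitivity (bsub (bscal (/ dl) (bsub (phiL (t + dl)) (phiL t))) (bscal (/ dl * dl) c)).
      rewrite Rinv_l by auto. rewrite bscal_1; auto. vring. }
    rewrite E, bnorm_scal.
    assert (Hb : bnorm (bsub (bsub (phiL (t + dl)) (phiL t)) (bscal dl c)) <= K * dl ^ 2).
    { destruct (Rlt_or_le 0 dl).
      - pose proof (phiL_anchor t (t + dl) t ltac:(lra) ltac:(lra) ltac:(lra) ltac:(lra)).
        replace (t + dl - t) with dl in H0 by ring. exact H0.
      - pose proof (phiL_anchor (t + dl) t t ltac:(lra) ltac:(lra) ltac:(lra) ltac:(lra)).
        replace (bsub (bsub (phiL (t + dl)) (phiL t)) (bscal dl c)) with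
          (bopp (bsub (bsub (phiL t) (phiL (t + dl))) (bscal (t - (t + dl)) c))) by vring.
        rewrite bnorm_opp. replace ((t - (t + dl)) ^ 2) with (dl ^ 2) in H0 by ring. exact H0. }
    rewrite Rabs_inv. assert (0 < Rabs dl) by (apply Rabs_pos_lt; auto).
    replace (dl ^ 2) with (Rabs dl * Rabs dl) in Hb by (rewrite <- Rabs_mult; rewrite Rabs_pos_eq; [ring|nra]).
    apply (Rmult_lt_reg_l (Rabs dl)); auto. rewrite <- Rmult_assoc, Rinv_r, Rmult_1_l by lra.
    assert (K * Rabs dl < e) by (apply (Rmult_lt_compat_r (K + 1)) in Hdl; nra). nra.
  - intros s Hs. pose proof (phiL_anchor 0 s 0 ltac:(lra) ltac:(lra) ltac:(lra) ltac:(lra)).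
    rewrite phiL_0, Rminus_0_r in H. exact H.
Qed.

End Conv.

Lemma loc_glob (a b : R) (Pr : R -> R -> Prop) : a <= b ->
  (forall t v v', Pr t v -> v <= v' -> Pr t v') ->
  (forall c, a <= c <= b -> exists d, d > 0 /\ exists vc, forall t, a <= t <= b -> Rabs (t - c) < d -> Pr t vc) ->
  exists v, forall t, a <= t <= b -> Pr t v.
Proof.
  intros Hab Hmono Hloc.
  set (E := fun x => a <= x <= b /\ exists v, forall t, a <= t <= x -> Pr t v).
  assert (Ea : E a).
  { destruct (Hloc a ltac:(lra)) as [d [Hd [va Hva]]]. split. lra. exists va. intros t Ht.
    apply Hva. lra. replace (t - a) with 0 by lra. rewrite Rabs_R0; lra. }
  assert (Hbd : bound E) by (exists b; intros x [Hx _]; lra).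
  destruct (completeness E Hbd (ex_intro _ a Ea)) as [c [Hub Hlub]].
  assert (Hac : a <= c) by (apply Hub; auto).
  assert (Hcb : c <= b) by (apply Hlub; intros x [Hx _]; lra).
  destruct (Hloc c ltac:(lra)) as [d [Hd [vc Hvc]]].
  assert (Hx : exists x, E x /\ c - d < x).
  { apply NNPP. intros Hn. assert (c <= c - d); [|lra]. apply Hlub. intros x Ex.
    destruct (Rle_or_lt x (c - d)); auto. exfalso. apply Hn. eauto. }
  destruct Hx as [x [[Hx1 [vx Hvx]] Hxc]].
  assert (Hxc' : x <= c) by (apply Hub; split; eauto).
  set (y := Rmin b (c + d / 2)).
  assert (Ey : E y).
  { split. split. unfold y. apply Rmin_glb; lra. apply Rmin_l.
    exists (Rmax vx vc). intros t Ht. destruct (Rle_or_lt t x).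
    - eapply Hmono. apply Hvx. lra. apply Rmax_l.
    - eapply Hmono. apply Hvc. assert (y <= b) by apply Rmin_l. lra.
      assert (y <= c + d / 2) by apply Rmin_r. apply Rabs_def1; lra. apply Rmax_r. }
  assert (Hyc : y <= c) by (apply Hub; auto).
  assert (Hyb : y = b).
  { unfold y in *. destruct (Rle_or_lt b (c + d / 2)). rewrite Rmin_left; lra.
    rewrite Rmin_right in Hyc; lra. }
  destruct Ey as [_ [v Hv]]. exists v. intros t Ht. apply Hv. lra.
Qed.

Section Bnd.
Context {V : Type} {BV : Banach V}.

Lemma cont_bounded a b (g : R -> V) : a <= b -> cont_on a b g -> exists B, forall t, a <= t <= b -> bnorm (g t) <= B.
Proof.
  intros Hab Hc. apply (loc_glob a b (fun t v => bnorm (g t) <= v)); auto.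
  - intros; lra.
  - intros c Hc'. destruct (Hc c Hc' 1 ltac:(lra)) as [d [Hd H]]. exists d. split; auto.
    exists (bnorm (g c) + 1). intros t Ht Htc. destruct (Req_dec t c) as [->|Hne]. lra.
    specialize (H t Ht Hne Htc). pose proof (bnorm_rev (g t) (g c)). lra.
Qed.

Lemma deriv_unique a b (g g1 g2 : R -> V) t : a < b -> deriv_on a b g g1 -> deriv_on a b g g2 -> a <= t <= b -> g1 t = g2 t.
Proof.
  intros Hab H1 H2 Ht. apply bnorm_eq0_sub. apply Rle_plus_epsilon. intros e He. rewrite Rplus_0_l.
  destruct (H1 t Ht (e/2) ltac:(lra)) as [d1 [Hd1 K1]]. destruct (H2 t Ht (e/2) ltac:(lra)) as [d2 [Hd2 K2]].
  set (m := Rmin (Rmin d1 d2) (b - a) / 2).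
  assert (Hm0 : 0 < m) by (unfold m; assert (0 < Rmin (Rmin d1 d2) (b - a)) by (repeat apply Rmin_glb_lt; lra); lra).
  assert (Hm1 : m < d1) by (unfold m; pose proof (Rmin_l (Rmin d1 d2) (b - a)); pose proof (Rmin_l d1 d2); lra).
  assert (Hm2 : m < d2) by (unfold m; pose proof (Rmin_l (Rmin d1 d2) (b - a)); pose proof (Rmin_r d1 d2); lra).
  assert (Hm3 : m < b - a) by (unfold m; pose proof (Rmin_r (Rmin d1 d2) (b - a)); lra).
  assert (Hm4 : m <= (b - a) / 2) by (unfold m; pose proof (Rmin_r (Rmin d1 d2) (b - a)); lra).
  assert (Hdel : exists dl, dl <> 0 /\ Rabs dl = m /\ a <= t + dl <= b).
  { destruct (Rle_or_lt (t + m) b). exists m. split. lra. split. apply Rabs_pos_eq; lra. lra.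
    exists (- m). split. lra. split. rewrite Rabs_Ropp. apply Rabs_pos_eq; lra. lra. }
  destruct Hdel as [dl [Hdl0 [Hdlm Hdom]]].
  specialize (K1 dl Hdom Hdl0 ltac:(rewrite Rminus_0_r; lra)).
  specialize (K2 dl Hdom Hdl0 ltac:(rewrite Rminus_0_r; lra)).
  pose proof (bnorm_tri3 (g1 t) (bscal (/ dl) (bsub (g (t + dl)) (g t))) (g2 t)).
  rewrite bnorm_sub_sym in K1. lra.
Qed.

Lemma C1_bounded a b (g : R -> V) : a <= b -> C1_on a b g -> exists B, forall t, a <= t <= b -> bnorm (g t) <= B.
Proof.
  intros Hab [g' [Hd Hc]]. destruct (cont_bounded a b g' Hab Hc) as [B HB].
  exists (bnorm (g a) + B * (b - a)). intros t Ht.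
  pose proof (mvi_deriv a b g g' a t bzero B Hd ltac:(lra) ltac:(lra) ltac:(lra)).
  assert (forall s, a <= s <= t -> bnorm (bsub (g' s) bzero) <= B).
  { intros s Hs. replace (bsub (g' s) bzero) with (g' s) by vring. apply HB. lra. }
  specialize (H H0). replace (bsub (bsub (g t) (g a)) (bscal (t - a) bzero)) with (bsub (g t) (g a)) in H by vring.
  pose proof (bnorm_rev (g t) (g a)). assert (B * (t - a) <= B * (b - a)).
  { apply Rmult_le_compat_l; try lra. specialize (HB a ltac:(lra)). pose proof (bnorm_ge0 (g' a)). lra. }
  lra.
Qed.

End Bnd.

Section Tube.
Context {X : Type} {BX : Banach X}.
Variable T : R.
Variable f : R -> X -> X.
Variables u u1 : R -> X.
Variable Df : R -> X -> R -> X -> X.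
Hypothesis HT : 0 <= T.
Hypothesis Hu : deriv_on 0 T u u1.
Hypothesis HDb : forall t x, 0 <= t <= T -> exists M, forall s y, bnorm (Df t x s y) <= M * (Rabs s + bnorm y).
Hypothesis HFr : forall t x, 0 <= t <= T -> forall eps, eps > 0 -> exists delta, delta > 0 /\
       forall s y, 0 <= t + s <= T -> Rabs s + bnorm y < delta ->
         bnorm (bsub (bsub (f (t + s) (badd x y)) (f t x)) (Df t x s y)) <= eps * (Rabs s + bnorm y).
Hypothesis HDc : forall t x, 0 <= t <= T -> forall eps, eps > 0 -> exists delta, delta > 0 /\
       forall t' x', 0 <= t' <= T -> Rabs (t' - t) + bnorm (bsub x' x) < delta ->
         forall s y, bnorm (bsub (Df t' x' s y) (Df t x s y)) <= eps * (Rabs s + bnorm y).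

Definition tubeP tau Vb := 0 <= Vb /\ forall t' x', 0 <= t' <= T -> Rabs (t' - tau) + bnorm (bsub x' (u tau)) < / (1 + Vb) ->
  bnorm (f t' x') <= Vb /\ forall s y, bnorm (Df t' x' s y) <= Vb * (Rabs s + bnorm y).

Lemma tube_exists : exists Vb, forall tau, 0 <= tau <= T -> tubeP tau Vb.
Proof.
  apply loc_glob; auto.
  - intros t v v' [Hv H] Hvv. split. lra. intros t' x' Ht' Hd.
    assert (/ (1 + v') <= / (1 + v)) by (apply Rinv_le_contravar; lra).
    destruct (H t' x' Ht' ltac:(lra)) as [H1 H2]. split. lra.
    intros s y. specialize (H2 s y). pose proof (Rabs_pos s). pose proof (bnorm_ge0 y). nra.
  - intros c Hc. set (uc := u c).
    destruct (HDb c uc Hc) as [Mc HMc]. set (M1 := Rabs Mc + 1).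
    destruct (HDc c uc Hc 1 ltac:(lra)) as [d1 [Hd1 H1]].
    destruct (HFr c uc Hc 1 ltac:(lra)) as [d2 [Hd2 H2]].
    set (rho := Rmin d1 d2). assert (Hrho : 0 < rho) by (apply Rmin_glb_lt; lra).
    destruct (deriv_est 0 T u u1 c Hu Hc 1 ltac:(lra)) as [eta [Heta He]].
    set (K := 2 + bnorm (u1 c)). assert (HK : 2 <= K) by (unfold K; pose proof (bnorm_ge0 (u1 c)); lra).
    exists (Rmin eta (rho / (2 * K))). split. apply Rmin_glb_lt; auto. apply Rdiv_lt_0_compat; lra.
    set (Vc := Rmax M1 (Rmax (bnorm (f c uc) + M1 * rho) (2 / rho))).
    exists Vc. intros tau Htau Htc.
    assert (Htc1 : Rabs (tau - c) < eta) by (eapply Rlt_le_trans; [apply Htc|apply Rmin_l]).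
    assert (Htc2 : Rabs (tau - c) < rho / (2 * K)) by (eapply Rlt_le_trans; [apply Htc|apply Rmin_r]).
    assert (Hclose : Rabs (tau - c) + bnorm (bsub (u tau) uc) < rho / 2).
    { destruct (Req_dec tau c) as [->|Hne].
      - unfold uc. rewrite bnorm_sub_self, Rminus_diag, Rabs_R0. lra.
      - specialize (He (tau - c) ltac:(lra) Htc1 ltac:(replace (c + (tau - c)) with tau by ring; lra)).
        replace (c + (tau - c)) with tau in He by ring. fold uc in He.
        replace (bsub (u tau) uc) with (badd (bsub (bsub (u tau) uc) (bscal (tau - c) (u1 c))) (bscal (tau - c) (u1 c))) by vring.
        pose proof (bnorm_triangle (bsub (bsub (u tau) uc) (bscal (tau - c) (u1 c))) (bscal (tau - c) (u1 c))).
        rewrite bnorm_scal in H.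
        assert (Rabs (tau - c) * K < rho / 2).
        { apply (Rmult_lt_compat_r K) in Htc2; [|lra]. replace (rho / (2 * K) * K) with (rho / 2) in Htc2 by (field; lra). lra. }
        unfold K in H0. nra. }
    assert (HM1 : M1 <= Vc) by apply Rmax_l.
    assert (Hfb : bnorm (f c uc) + M1 * rho <= Vc) by (eapply Rle_trans; [|apply Rmax_r]; apply Rmax_l).
    assert (Hrv : 2 / rho <= Vc) by (eapply Rle_trans; [|apply Rmax_r]; apply Rmax_r).
    assert (HM10 : 1 <= M1) by (unfold M1; pose proof (Rabs_pos Mc); lra).
    split. lra. intros t' x' Ht' Hd.
    assert (Hinv : / (1 + Vc) < rho / 2).
    { apply (Rmult_lt_reg_r (1 + Vc)). lra. rewrite Rinv_l by lra.
      assert (2 / rho * rho = 2) by (field; lra). nra. }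
    assert (Hnear : Rabs (t' - c) + bnorm (bsub x' uc) < rho).
    { pose proof (bnorm_tri3 x' (u tau) uc). replace (t' - c) with ((t' - tau) + (tau - c)) by ring.
      pose proof (Rabs_triang (t' - tau) (tau - c)). lra. }
    assert (Hn1 : Rabs (t' - c) + bnorm (bsub x' uc) < d1) by (pose proof (Rmin_l d1 d2); fold rho in H; lra).
    assert (Hn2 : Rabs (t' - c) + bnorm (bsub x' uc) < d2) by (pose proof (Rmin_r d1 d2); fold rho in H; lra).
    assert (HDf : forall s y, bnorm (Df t' x' s y) <= M1 * (Rabs s + bnorm y)).
    { intros s y. specialize (H1 t' x' Ht' Hn1 s y). specialize (HMc s y).
      pose proof (bnorm_rev (Df t' x' s y) (Df c uc s y)).
      assert (Mc * (Rabs s + bnorm y) <= Rabs Mc * (Rabs s + bnorm y)).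
      { apply Rmult_le_compat_r. pose proof (Rabs_pos s); pose proof (bnorm_ge0 y); lra. apply Rle_abs. }
      unfold M1. lra. }
    split.
    + specialize (H2 (t' - c) (bsub x' uc) ltac:(replace (c + (t' - c)) with t' by ring; lra) Hn2).
      replace (c + (t' - c)) with t' in H2 by ring. replace (badd uc (bsub x' uc)) with x' in H2 by vring.
      replace (f t' x') with (badd (badd (bsub (bsub (f t' x') (f c uc)) (Df c uc (t' - c) (bsub x' uc))) (f c uc)) (Df c uc (t' - c) (bsub x' uc))) by vring.
      eapply Rle_trans. apply bnorm_triangle. eapply Rle_trans. apply Rplus_le_compat_r. apply bnorm_triangle.
      specialize (HMc (t' - c) (bsub x' uc)).
      assert (Mc * (Rabs (t' - c) + bnorm (bsub x' uc)) <= Rabs Mc * (Rabs (t' - c) + bnorm (bsub x' uc))).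
      { apply Rmult_le_compat_r. pose proof (Rabs_pos (t' - c)); pose proof (bnorm_ge0 (bsub x' uc)); lra. apply Rle_abs. }
      assert (M1 * (Rabs (t' - c) + bnorm (bsub x' uc)) <= M1 * rho) by (apply Rmult_le_compat_l; lra).
      unfold M1 in *. lra.
    + intros s y. specialize (HDf s y). pose proof (Rabs_pos s); pose proof (bnorm_ge0 y). nra.
Qed.

Lemma tube_lip tau Vb t1 x1 t2 x2 : tubeP tau Vb ->
  0 <= t1 <= T -> Rabs (t1 - tau) + bnorm (bsub x1 (u tau)) < / (1 + Vb) ->
  0 <= t2 <= T -> Rabs (t2 - tau) + bnorm (bsub x2 (u tau)) < / (1 + Vb) ->
  bnorm (bsub (f t1 x1) (f t2 x2)) <= (Vb + 1) * (Rabs (t1 - t2) + bnorm (bsub x1 x2)).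
Proof.
  intros [HV0 HV] Ht1 Hx1 Ht2 Hx2.
  set (dt := t1 - t2). set (dx := bsub x1 x2).
  set (tt := fun th => t2 + th * dt). set (xx := fun th => badd x2 (bscal th dx)).
  set (g := fun th => f (tt th) (xx th)).
  set (B := (Vb + 1) * (Rabs dt + bnorm dx)).
  assert (Hn : 0 <= Rabs dt + bnorm dx) by (pose proof (Rabs_pos dt); pose proof (bnorm_ge0 dx); lra).
  assert (Hin : forall th, 0 <= th <= 1 -> 0 <= tt th <= T /\ Rabs (tt th - tau) + bnorm (bsub (xx th) (u tau)) < / (1 + Vb)).
  { intros th Hth. unfold tt, xx, dt. split. nra.
    replace (t2 + th * (t1 - t2) - tau) with ((1 - th) * (t2 - tau) + th * (t1 - tau)) by ring.
    replace (bsub (badd x2 (bscal th dx)) (u tau)) with (badd (bscal (1 - th) (bsub x2 (u tau))) (bscal th (bsub x1 (u tau)))) by (unfold dx; vring).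
    pose proof (Rabs_triang ((1 - th) * (t2 - tau)) (th * (t1 - tau))).
    rewrite !Rabs_mult, (Rabs_pos_eq (1 - th)), (Rabs_pos_eq th) in H by lra.
    pose proof (bnorm_triangle (bscal (1 - th) (bsub x2 (u tau))) (bscal th (bsub x1 (u tau)))).
    rewrite !bnorm_scal, (Rabs_pos_eq (1 - th)), (Rabs_pos_eq th) in H0 by lra.
    assert (Hp : 0 < / (1 + Vb)) by (apply Rinv_0_lt_compat; lra).
    set (r := / (1 + Vb)) in *.
    set (A1 := Rabs (t1 - tau) + bnorm (bsub x1 (u tau))) in *.
    set (A2 := Rabs (t2 - tau) + bnorm (bsub x2 (u tau))) in *.
    assert (Hc : (1 - th) * A2 + th * A1 < r).
    { destruct (Rlt_or_le th 1).
      - assert ((1 - th) * (A2 - r) < 0) by (apply Rmult_pos_neg; lra) || (assert (0 < 1 - th) by lra; nra).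
        assert (th * (A1 - r) <= 0) by nra. nra.
      - assert (th = 1) by lra. subst th. lra. }
    unfold A1, A2 in Hc. nra. }
  assert (Hloc : forall th0, 0 <= th0 <= 1 -> exists eta, eta > 0 /\ forall th, 0 <= th <= 1 -> Rabs (th - th0) < eta ->
     bnorm (bsub (g th) (g th0)) <= B * Rabs (th - th0)).
  { intros th0 Hth0. destruct (Hin th0 Hth0) as [Ht0 Hx0].
    destruct (HFr (tt th0) (xx th0) Ht0 1 ltac:(lra)) as [del [Hdel Hfr]].
    exists (del / (Rabs dt + bnorm dx + 1)). split. apply Rdiv_lt_0_compat; lra.
    intros th Hth Hlt. destruct (Hin th Hth) as [Ht Hx].
    set (s := (th - th0) * dt). set (y := bscal (th - th0) dx).
    assert (Hsy : Rabs s + bnorm y = Rabs (th - th0) * (Rabs dt + bnorm dx)).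
    { unfold s, y. rewrite Rabs_mult, bnorm_scal. ring. }
    assert (Hsmall : Rabs s + bnorm y < del).
    { rewrite Hsy. apply (Rmult_lt_compat_r (Rabs dt + bnorm dx + 1)) in Hlt; [|lra].
      replace (del / (Rabs dt + bnorm dx + 1) * (Rabs dt + bnorm dx + 1)) with del in Hlt by (field; lra).
      pose proof (Rabs_pos (th - th0)). nra. }
    assert (Eg : g th = f (tt th0 + s) (badd (xx th0) y)).
    { unfold g. f_equal. unfold tt, s. ring. unfold xx, y. vring. }
    specialize (Hfr s y ltac:(replace (tt th0 + s) with (tt th) by (unfold tt, s; ring); lra) Hsmall).
    rewrite <- Eg in Hfr. fold (g th0) in Hfr.
    destruct (HV (tt th0) (xx th0) Ht0 Hx0) as [_ HDv]. specialize (HDv s y).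
    replace (bsub (g th) (g th0)) with (badd (bsub (bsub (g th) (g th0)) (Df (tt th0) (xx th0) s y)) (Df (tt th0) (xx th0) s y)) by vring.
    eapply Rle_trans. apply bnorm_triangle. unfold B. rewrite Hsy in Hfr, HDv. nra. }
  assert (HM := mvi_core g 0 1 B ltac:(lra)).
  assert (E1 : g 1 = f t1 x1) by (unfold g; f_equal; [unfold tt, dt; ring | unfold xx, dx; vring]).
  assert (E0 : g 0 = f t2 x2) by (unfold g; f_equal; [unfold tt; ring | unfold xx; vring]).
  rewrite E1, E0 in HM. replace B with (B * (1 - 0)) by ring. apply HM.
  - intros th0 Hth0 e He. destruct (Hloc th0 Hth0) as [eta [Heta H]].
    exists (Rmin eta (e / (B + 1))). split. apply Rmin_glb_lt; auto. apply Rdiv_lt_0_compat; unfold B; nra.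
    intros th Hth Hlt. specialize (H th Hth (Rlt_le_trans _ _ _ Hlt (Rmin_l _ _))).
    assert (Rabs (th - th0) < e / (B + 1)) by (eapply Rlt_le_trans; [apply Hlt|apply Rmin_r]).
    assert (HB : 0 <= B) by (unfold B; nra).
    apply (Rmult_lt_compat_r (B + 1)) in H0; [|lra].
    replace (e / (B + 1) * (B + 1)) with e in H0 by (field; lra). pose proof (Rabs_pos (th - th0)). nra.
  - intros th0 Hth0. destruct (Hloc th0 ltac:(lra)) as [eta [Heta H]].
    exists eta. split; auto. intros dl Hdl Hdb. specialize (H (th0 + dl) ltac:(lra) ltac:(replace (th0 + dl - th0) with dl by ring; rewrite Rabs_pos_eq; lra)).
    replace (th0 + dl - th0) with dl in H by ring. rewrite Rabs_pos_eq in H by lra. exact H.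
Qed.

End Tube.

Section LinH.
Context {V W : Type} {BV : Banach V} {BW : Banach W}.
Lemma sub_D (D : V -> Prop) x y : subspace D -> D x -> D y -> D (bsub x y).
Proof.
  intros [H0 H] Hx Hy. unfold bsub. rewrite bopp_scal.
  destruct (H y y (-1) Hy Hy) as [_ H1]. destruct (H x (bscal (-1) y) 0 Hx H1) as [H2 _]. auto.
Qed.
Lemma add_D (D : V -> Prop) x y : subspace D -> D x -> D y -> D (badd x y).
Proof. intros [H0 H] Hx Hy. apply (H x y 0 Hx Hy). Qed.
Lemma scal_D (D : V -> Prop) c x : subspace D -> D x -> D (bscal c x).
Proof. intros [H0 H] Hx. apply (H x x c Hx Hx). Qed.
Lemma lin_add' (D : V -> Prop) (L : V -> W) x y : lin_on D L -> D x -> D y -> L (badd x y) = badd (L x) (L y).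
Proof. intros H Hx Hy. apply (H x y 0 Hx Hy). Qed.
Lemma lin_scal' (D : V -> Prop) (L : V -> W) c x : lin_on D L -> D x -> L (bscal c x) = bscal c (L x).
Proof. intros H Hx. apply (H x x c Hx Hx). Qed.
Lemma lin_sub' (D : V -> Prop) (L : V -> W) x y : subspace D -> lin_on D L -> D x -> D y -> L (bsub x y) = bsub (L x) (L y).
Proof.
  intros HS H Hx Hy. unfold bsub. rewrite !bopp_scal. rewrite (lin_add' D L); auto.
  rewrite (lin_scal' D L); auto. apply scal_D; auto.
Qed.
End LinH.

Lemma pow_le_sq x n : 0 <= x <= 1 -> (2 <= n)%nat -> x ^ n <= x ^ 2.
Proof.
  intros Hx Hn. induction n. lia. destruct (Nat.eq_dec n 1) as [->|Hne]. simpl; lra.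
  assert (x ^ n <= x ^ 2) by (apply IHn; lia). simpl. pose proof (pow_le x n ltac:(lra)). nra.
Qed.
Theorem theorem4p2
  (X Y : Type) (BX : Banach X) (BY : Banach Y) (T : R)
  (D : X -> Prop) (A : X -> X) (dA : X -> Y)
  (f : R -> X -> X) (g : R -> Y) (u : R -> X)
  (Sg : R -> X -> X) (omega : R) (K : R -> Y -> X)
  (Psi : R -> R -> X -> X) (p : nat)
  (HT : T > 0)
  (* A and the boundary operator are linear on D(A) *)
  (Hlin : subspace D /\ lin_on D A /\ lin_on D dA)
  (* (A1) *)
  (HA1 : forall v : Y, exists x, D x /\ dA x = v)
  (* (A2) *)
  (HA2dense : forall x eps, eps > 0 ->
      exists y, D y /\ dA y = bzero /\ bnorm (bsub x y) < eps)
  (HA2gen : C0_semigroup Sg /\ generates Sg (fun x => D x /\ dA x = bzero) A /\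
            negative_type Sg omega)
  (* (A3), real spectral parameter z *)
  (HA3sol : forall z v, z > omega ->
      D (K z v) /\ A (K z v) = bscal z (K z v) /\ dA (K z v) = v /\
      (forall x, D x -> A x = bscal z x -> dA x = v -> x = K z v))
  (HA3bd : forall omega0, omega0 > omega -> exists C, forall z v, z >= omega0 ->
      bnorm (K z v) <= C * bnorm v)
  (* (A4) *)
  (HA4 : C1_TX T f)
  (* u solves the problem *)
  (Hu_dom : forall t, 0 <= t <= T -> D (u t) /\ dA (u t) = g t)
  (Hu_ode : deriv_on 0 T u (fun t => badd (A (u t)) (f t (u t))))
  (* (A5) *)
  (HA5 : C2_on 0 T u /\ (forall t, 0 <= t <= T -> D (u t) /\ D (A (u t))) /\
         C1_on 0 T (fun t => A (u t)) /\ C1_on 0 T (fun t => A (A (u t))))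
  (* (A6) *)
  (HA6 : (forall t, 0 <= t <= T -> D (f t (u t))) /\ cont_on 0 T (fun t => A (f t (u t))))
  (* Psi has order p >= 1 for the two subproblems *)
  (Hp : (p >= 1)%nat)
  (Horder : exists Cp k0, k0 > 0 /\ forall (k : R) (n : nat), 0 < k <= k0 ->
      INR (S n) * k <= T ->
      (forall v : R -> X, v 0 = u (INR n * k) ->
         deriv_on 0 (k / 2) v (fun s => f (INR n * k + s) (v s)) ->
         bnorm (bsub (Psi (k / 2) (INR n * k) (u (INR n * k))) (v (k / 2)))
           <= Cp * (k / 2) ^ (p + 1)) /\
      (forall z : R -> X, z 0 = wbar_k Sg K A dA f Psi u k n ->
         deriv_on 0 (k / 2) z (fun s => f (INR n * k + k / 2 + s) (z s)) ->
         bnorm (bsub (Psi (k / 2) (INR n * k + k / 2) (wbar_k Sg K A dA f Psi u k n)) (z (k / 2)))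
           <= Cp * (k / 2) ^ (p + 1))) :
  exists C k0, k0 > 0 /\ forall (k : R) (n : nat), 0 < k <= k0 ->
    INR (S n) * k <= T ->
    bnorm (bsub (Psi (k / 2) (INR n * k + k / 2) (wbar_k Sg K A dA f Psi u k n))
                (u (INR (S n) * k)))
      <= C * k ^ 2.

Proof.
  destruct Hlin as [HDsub [HAlin HdAlin]].
  destruct HA2gen as [[HSbl [HS0 [HSadd HScont]]] [Hgen [Homega [Ms0 HMs0]]]].
  set (Ms := Rabs Ms0).
  assert (HMs : 0 <= Ms) by apply Rabs_pos.
  assert (HSbd : forall t x, t >= 0 -> bnorm (Sg t x) <= Ms * bnorm x).
  { intros t x Ht. eapply Rle_trans. apply HMs0; auto.
    assert (He : exp (omega * t) <= 1). { rewrite <- exp_0. destruct (Req_dec t 0) as [->|]. rewrite Rmult_0_r; lra.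
      left. apply exp_increasing. nra. }
    pose proof (exp_pos (omega * t)). pose proof (bnorm_ge0 x). unfold Ms.
    destruct (Rle_or_lt 0 Ms0).
    - rewrite Rabs_pos_eq by lra.
      assert (0 <= Ms0 * bnorm x * (1 - exp (omega * t))) by (apply Rmult_le_pos; [apply Rmult_le_pos|]; lra). nra.
    - rewrite Rabs_left by lra.
      assert (0 <= (- Ms0) * bnorm x * exp (omega * t)) by (apply Rmult_le_pos; [apply Rmult_le_pos|]; lra).
      assert (0 <= (- Ms0) * bnorm x) by (apply Rmult_le_pos; lra). nra. }
  assert (HSlin : forall t, t >= 0 -> lin_on (fun _ => True) (Sg t)) by (intros t Ht; apply (HSbl t Ht)).
  assert (HK0 : forall v, D (K 0 v) /\ A (K 0 v) = bzero /\ dA (K 0 v) = v).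
  { intros v. destruct (HA3sol 0 v ltac:(lra)) as [H1 [H2 [H3 _]]]. rewrite bscal_0_l in H2. auto. }
  assert (HK0u : forall x v, D x -> A x = bzero -> dA x = v -> x = K 0 v).
  { intros x v Hx HAx Hdx. destruct (HA3sol 0 v ltac:(lra)) as [_ [_ [_ H]]]. apply H; auto. rewrite bscal_0_l; auto. }
  destruct HA5 as [[u1 [Hu1 [u2 [Hu2 Hu2c]]]] [HDu [HAuC1 HAAuC1]]].
  assert (HT0 : 0 <= T) by lra.
  assert (Hu1eq : forall t, 0 <= t <= T -> u1 t = badd (A (u t)) (f t (u t))).
  { intros t Ht. apply (deriv_unique 0 T u u1 (fun t => badd (A (u t)) (f t (u t))) t HT Hu1 Hu_ode Ht). }
  destruct (cont_bounded 0 T u2 HT0 Hu2c) as [B2 HB2].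
  destruct (C1_bounded 0 T (fun t => A (u t)) HT0 HAuC1) as [Ba HBa].
  destruct (C1_bounded 0 T (fun t => A (A (u t))) HT0 HAAuC1) as [Baa HBaa].
  destruct HA6 as [HDf6 HAfc].
  destruct (cont_bounded 0 T (fun t => A (f t (u t))) HT0 HAfc) as [Baf HBaf].
  assert (HB2p : 0 <= B2) by (pose proof (HB2 0 ltac:(lra)); pose proof (bnorm_ge0 (u2 0)); lra).
  assert (HBap : 0 <= Ba) by (pose proof (HBa 0 ltac:(lra)); pose proof (bnorm_ge0 (A (u 0))); simpl in *; lra).
  assert (HBaap : 0 <= Baa) by (pose proof (HBaa 0 ltac:(lra)); pose proof (bnorm_ge0 (A (A (u 0)))); simpl in *; lra).
  assert (HBafp : 0 <= Baf) by (pose proof (HBaf 0 ltac:(lra)); pose proof (bnorm_ge0 (A (f 0 (u 0)))); simpl in *; lra).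
  destruct HA4 as [Df [HDf1 [HFr HDc]]].
  assert (HDb : forall t x, 0 <= t <= T -> exists M, forall s y, bnorm (Df t x s y) <= M * (Rabs s + bnorm y)).
  { intros t x Ht. apply (HDf1 t x Ht). }
  destruct (tube_exists T f u u1 Df HT0 Hu1 HDb HFr HDc) as [Vb Htube].
  assert (HVb : 0 <= Vb) by (apply (Htube 0 ltac:(lra))).
  set (r := / (1 + Vb)). assert (Hr : 0 < r) by (unfold r; apply Rinv_0_lt_compat; lra).
  set (Lf := Vb + 1).
  destruct Horder as [Cp [k1 [Hk1 Hord]]].
  set (CP := Rabs Cp + Lf * (1 + Vb)).
  set (CW := Ms * CP + Ms * Baa + Ms * Baf).
  set (Cwu := CW + Vb + Ba).
  assert (HCP : 0 <= CP) by (unfold CP, Lf; pose proof (Rabs_pos Cp); nra).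
  assert (HCW : 0 <= CW) by (unfold CW; nra).
  assert (HCwu : 0 <= Cwu) by (unfold Cwu; lra).
  exists (Rabs Cp + Lf * (1 + Vb) + CW + Lf * (1 + Cwu) + B2 + 1).
  exists (Rmin (Rmin 1 k1) (Rmin (/ (Lf + 1)) (r / (4 * (1 + Cwu + Vb))))).
  split.
  { repeat apply Rmin_glb_lt; try lra. apply Rinv_0_lt_compat; unfold Lf; lra.
    apply Rdiv_lt_0_compat; lra. }
  intros k n Hk HnT.
  assert (Hk1' : k <= 1) by (pose proof (Rmin_l (Rmin 1 k1) (Rmin (/ (Lf + 1)) (r / (4 * (1 + Cwu + Vb))))); pose proof (Rmin_l 1 k1); lra).
  assert (Hkk1 : k <= k1) by (pose proof (Rmin_l (Rmin 1 k1) (Rmin (/ (Lf + 1)) (r / (4 * (1 + Cwu + Vb))))); pose proof (Rmin_r 1 k1); lra).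
  assert (HkL : k * Lf <= 1).
  { assert (k <= / (Lf + 1)) by (pose proof (Rmin_r (Rmin 1 k1) (Rmin (/ (Lf + 1)) (r / (4 * (1 + Cwu + Vb))))); pose proof (Rmin_l (/ (Lf + 1)) (r / (4 * (1 + Cwu + Vb)))); lra).
    apply (Rmult_le_compat_r (Lf + 1)) in H; [|unfold Lf; lra]. rewrite Rinv_l in H by (unfold Lf; lra). unfold Lf in *; nra. }
  assert (Hkr : k * (1 + Cwu + Vb) <= r / 4).
  { assert (k <= r / (4 * (1 + Cwu + Vb))) by (pose proof (Rmin_r (Rmin 1 k1) (Rmin (/ (Lf + 1)) (r / (4 * (1 + Cwu + Vb))))); pose proof (Rmin_r (/ (Lf + 1)) (r / (4 * (1 + Cwu + Vb)))); lra).
    apply (Rmult_le_compat_r (1 + Cwu + Vb)) in H; [|lra]. replace (r / (4 * (1 + Cwu + Vb)) * (1 + Cwu + Vb)) with (r / 4) in H by (field; lra). lra. }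
  destruct Hk as [Hk0 Hkk0].
  rewrite S_INR in HnT |- *.
  set (tn := INR n * k) in *.
  assert (Htn : 0 <= tn) by (unfold tn; pose proof (pos_INR n); nra).
  assert (HtnT : tn + k <= T) by (unfold tn in *; lra).
  replace ((INR n + 1) * k) with (tn + k) by (unfold tn; ring).
  destruct (Hord k n ltac:(lra) ltac:(rewrite S_INR; fold tn; lra)) as [Hord1 Hord2].
  set (u0 := u tn). set (F0 := f tn u0). set (a := A u0).
  destruct (Htube tn ltac:(lra)) as [_ HtubeT].
  assert (HF0 : bnorm F0 <= Vb).
  { apply (HtubeT tn u0 ltac:(lra)). unfold u0. rewrite Rminus_diag, Rabs_R0, bnorm_sub_self. fold r. lra. }
  destruct (ode_exists (fun s x => f (tn + s) x) u0 (k / 2) (r / 2) Vb Lf ltac:(lra) HVb ltac:(unfold Lf; lra)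
     ltac:(nra) ltac:(nra)) as [v [Hv0 [Hvd Hvest]]].
  { intros s x Hs Hx. apply (HtubeT (tn + s) x ltac:(lra)). fold r. unfold u0 in Hx.
    replace (tn + s - tn) with s by ring. rewrite Rabs_pos_eq by lra. nra. }
  { intros s1 x1 s2 x2 Hs1 Hx1 Hs2 Hx2.
    replace (s1 - s2) with ((tn + s1) - (tn + s2)) by ring.
    apply (tube_lip T f u Df HFr tn Vb).
    - apply Htube; lra.
    - lra.
    - fold r. unfold u0 in *. replace (tn + s1 - tn) with s1 by ring. rewrite Rabs_pos_eq by lra. nra.
    - lra.
    - fold r. unfold u0 in *. replace (tn + s2 - tn) with s2 by ring. rewrite Rabs_pos_eq by lra. nra. }
  set (P := Psi (k / 2) tn u0).
  assert (HP : bnorm (bsub P (badd u0 (bscal (k / 2) F0))) <= CP * (k / 2) ^ 2).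
  { specialize (Hord1 v Hv0 Hvd). fold tn u0 P in Hord1.
    specialize (Hvest (k / 2) ltac:(lra)). rewrite Rplus_0_r in Hvest. fold F0 in Hvest.
    assert (Hpw : (k / 2) ^ (p + 1) <= (k / 2) ^ 2) by (apply pow_le_sq; lra || lia).
    assert (Cp * (k / 2) ^ (p + 1) <= Rabs Cp * (k / 2) ^ 2).
    { eapply Rle_trans. apply Rmult_le_compat_r. apply pow_le; lra. apply Rle_abs.
      apply Rmult_le_compat_l; auto. apply Rabs_pos. }
    replace (bsub P (badd u0 (bscal (k / 2) F0))) with (badd (bsub P (v (k / 2))) (bsub (bsub (v (k / 2)) u0) (bscal (k / 2) F0))) by vring.
    eapply Rle_trans. apply bnorm_triangle. unfold CP. lra. }
  assert (HDu0 : D u0) by (apply HDu; lra).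
  assert (HDa : D a) by (apply HDu; lra).
  assert (HDF0 : D F0) by (apply HDf6; lra).
  set (AF0 := A F0).
  set (x0 := badd u0 (bscal (k / 2) F0)) in *.
  assert (HDx0 : D x0) by (apply add_D; auto; apply scal_D; auto).
  set (v0 := dA x0). set (v1 := dA a). set (y0 := K 0 v0). set (y1 := K 0 v1).
  assert (Hy0 : D y0 /\ A y0 = bzero /\ dA y0 = v0) by apply HK0.
  assert (Hy1 : D y1 /\ A y1 = bzero /\ dA y1 = v1) by apply HK0.
  destruct Hy0 as [HDy0 [HAy0 HdAy0]]. destruct Hy1 as [HDy1 [HAy1 HdAy1]].
  set (z := bsub x0 y0). set (q := bsub a y1). set (w := bscal (k / 2) AF0).
  assert (HDz : D z) by (apply sub_D; auto).
  assert (HDq : D q) by (apply sub_D; auto).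
  assert (HdAz : dA z = bzero) by (unfold z; rewrite (lin_sub' D dA) by auto; rewrite HdAy0; unfold v0; vring).
  assert (HdAq : dA q = bzero) by (unfold q; rewrite (lin_sub' D dA) by auto; rewrite HdAy1; unfold v1; vring).
  assert (HAz : A z = badd a (bscal (k / 2) AF0)).
  { unfold z. rewrite (lin_sub' D A) by auto. rewrite HAy0. unfold x0.
    rewrite (lin_add' D A) by (auto; apply scal_D; auto). rewrite (lin_scal' D A) by auto. unfold a, AF0. vring. }
  assert (HAq : A q = A a) by (unfold q; rewrite (lin_sub' D A) by auto; rewrite HAy1; vring).
  assert (Hlz := proj2 (Hgen z) (conj HDz HdAz)).
  assert (Hlq := proj2 (Hgen q) (conj HDq HdAq)).
  destruct (orbit_int_exists Sg Ms HSlin HSbd HSadd HScont y1 k Hk0) as [Iy HIy].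
  destruct (orbit_int_exists Sg Ms HSlin HSbd HSadd HScont q k Hk0) as [Iq HIq].
  destruct (orbit_int_exists Sg Ms HSlin HSbd HSadd HScont w k Hk0) as [Iw HIw].
  assert (HIz := gen_int Sg Ms HSlin HSbd HS0 HSadd z (A z) k Hk0 Hlz).
  assert (Hsum := is_RInt_add _ _ _ _ _ _ (is_RInt_add _ _ _ _ _ _ HIq HIy) HIw).
  assert (Hsum' : is_RInt (fun s => Sg s (A z)) 0 k (badd (badd Iq Iy) Iw)).
  { eapply is_RInt_ext; [lra| |apply Hsum]. intros s Hs. simpl.
    rewrite HAz. replace (badd a (bscal (k / 2) AF0)) with (badd (badd q y1) w) by (unfold q, w; vring).
    rewrite !(S_add Sg HSlin) by lra. auto. }
  assert (Hzeq := is_RInt_unique _ _ _ _ _ HIz Hsum').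
  assert (HRI := RInt_eq _ _ _ _ HIy).
  assert (HK0lin : K 0 (badd v0 (bscal k v1)) = badd y0 (bscal k y1)).
  { symmetry. apply HK0u.
    - apply add_D; auto. apply scal_D; auto.
    - rewrite (lin_add' D A) by (auto; apply scal_D; auto). rewrite (lin_scal' D A) by auto.
      rewrite HAy0, HAy1. vring.
    - rewrite (lin_add' D dA) by (auto; apply scal_D; auto). rewrite (lin_scal' D dA) by auto.
      rewrite HdAy0, HdAy1. auto. }
  set (W := wbar_k Sg K A dA f Psi u k n).
  assert (HW : W = bsub (badd (Sg k (bsub P y0)) (K 0 (badd v0 (bscal k v1)))) (RInt (fun s => Sg s y1) 0 k)) by reflexivity.
  assert (HSP : Sg k (bsub P y0) = badd (Sg k (bsub P x0)) (Sg k z)).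
  { replace (bsub P y0) with (badd (bsub P x0) z) by (unfold z; vring). apply (S_add Sg HSlin). lra. }
  assert (HSkz : Sg k z = badd z (badd (badd Iq Iy) Iw)) by (rewrite <- Hzeq; vring).
  assert (HWdiff : bsub W (badd x0 (bscal k a)) = badd (badd (Sg k (bsub P x0)) (bsub Iq (bscal k q))) Iw).
  { rewrite HW, HK0lin, HRI, HSP, HSkz. unfold z, q. vring. }
  assert (Hb1 : bnorm (Sg k (bsub P x0)) <= Ms * (CP * (k / 2) ^ 2)).
  { eapply Rle_trans. apply HSbd; lra. apply Rmult_le_compat_l; auto. }
  assert (HAF0 : bnorm AF0 <= Baf) by (apply (HBaf tn); lra).
  assert (Hb2 : bnorm Iw <= k * (Ms * ((k / 2) * Baf))).
  { pose proof (is_RInt_bound (fun s => Sg s w) 0 k Iw (Ms * bnorm w) ltac:(lra) HIw ltac:(intros s Hs; apply HSbd; lra)).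
    rewrite Rminus_0_r in H. eapply Rle_trans. apply H. apply Rmult_le_compat_l. lra. apply Rmult_le_compat_l. auto.
    unfold w. rewrite bnorm_scal, Rabs_pos_eq by lra. apply Rmult_le_compat_l; lra. }
  assert (HAAa : bnorm (A q) <= Baa) by (rewrite HAq; apply (HBaa tn); lra).
  assert (Hb3 : bnorm (bsub Iq (bscal k q)) <= k * (k * (Ms * Baa))).
  { assert (HIc := is_RInt_const q 0 k).
    assert (Hd := is_RInt_add _ _ _ _ _ _ HIq (is_RInt_scal _ (-1) _ _ _ HIc)).
    assert (Hd' : is_RInt (fun s => bsub (Sg s q) q) 0 k (bsub Iq (bscal k q))).
    { replace (bsub Iq (bscal k q)) with (badd Iq (bscal (-1) (bscal (k - 0) q))) by vring.
      eapply is_RInt_ext; [lra| |apply Hd]. intros s Hs. simpl. vring. }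
    pose proof (is_RInt_bound (fun s => bsub (Sg s q) q) 0 k _ (k * (Ms * Baa)) ltac:(lra) Hd') as H.
    rewrite Rminus_0_r in H. apply H. intros s Hs.
    eapply Rle_trans. apply (S_diff_bound Sg Ms HSlin HSbd HS0 HSadd q (A q) s ltac:(lra) Hlq).
    unfold Ms. rewrite Rabs_Rabsolu. fold Ms.
    assert (Ms * bnorm (A q) <= Ms * Baa) by (apply Rmult_le_compat_l; auto).
    assert (0 <= Ms * bnorm (A q)) by (apply Rmult_le_pos; auto; apply bnorm_ge0).
    nra. }
  assert (HWb : bnorm (bsub W (badd x0 (bscal k a))) <= CW * k ^ 2).
  { rewrite HWdiff. eapply Rle_trans. apply bnorm_triangle. eapply Rle_trans. apply Rplus_le_compat_r. apply bnorm_triangle.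
    unfold CW. assert (0 <= Ms * CP) by nra. assert (0 <= Ms * Baf) by nra. nra. }
  assert (HBa0 : bnorm a <= Ba) by (apply (HBa tn); lra).
  assert (HWu : bnorm (bsub W u0) <= k * Cwu).
  { replace (bsub W u0) with (badd (bsub W (badd x0 (bscal k a))) (badd (bscal (k / 2) F0) (bscal k a))) by (unfold x0; vring).
    eapply Rle_trans. apply bnorm_triangle. eapply Rle_trans. apply Rplus_le_compat_l. apply bnorm_triangle.
    rewrite !bnorm_scal, !Rabs_pos_eq by lra. unfold Cwu.
    assert (CW * k ^ 2 <= CW * k) by (apply Rmult_le_compat_l; [lra|]; simpl; nra).
    assert (k * bnorm F0 <= k * Vb) by (apply Rmult_le_compat_l; lra).
    assert (k * bnorm a <= k * Ba) by (apply Rmult_le_compat_l; lra).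
    assert (0 <= k * bnorm F0) by (apply Rmult_le_pos; [lra|apply bnorm_ge0]). nra. }
  assert (HWr : bnorm (bsub W u0) <= r / 4).
  { assert (0 <= k * Vb) by (apply Rmult_le_pos; lra). nra. }
  assert (HkVb : k * Vb <= r / 4).
  { assert (0 <= k * Cwu) by (apply Rmult_le_pos; lra). nra. }
  destruct (ode_exists (fun s x => f (tn + k / 2 + s) x) W (k / 2) (r / 4) Vb Lf ltac:(lra) HVb ltac:(unfold Lf; lra)
     ltac:(nra) ltac:(nra)) as [zz [Hz0 [Hzd Hzest]]].
  { intros s x Hs Hx. apply (HtubeT (tn + k / 2 + s) x ltac:(lra)). fold r. fold u0.
    replace (tn + k / 2 + s - tn) with (k / 2 + s) by ring. rewrite Rabs_pos_eq by lra.
    pose proof (bnorm_tri3 x W u0). nra. }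
  { intros s1 x1 s2 x2 Hs1 Hx1 Hs2 Hx2.
    replace (s1 - s2) with ((tn + k / 2 + s1) - (tn + k / 2 + s2)) by ring.
    apply (tube_lip T f u Df HFr tn Vb).
    - apply Htube; lra.
    - lra.
    - fold r. fold u0. replace (tn + k / 2 + s1 - tn) with (k / 2 + s1) by ring. rewrite Rabs_pos_eq by lra.
      pose proof (bnorm_tri3 x1 W u0). nra.
    - lra.
    - fold r. fold u0. replace (tn + k / 2 + s2 - tn) with (k / 2 + s2) by ring. rewrite Rabs_pos_eq by lra.
      pose proof (bnorm_tri3 x2 W u0). nra. }
  specialize (Hord2 zz Hz0 Hzd).
  specialize (Hzest (k / 2) ltac:(lra)). rewrite Rplus_0_r in Hzest.
  set (f2 := f (tn + k / 2) W) in *.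
  assert (Hf2 : bnorm (bsub f2 F0) <= Lf * (k / 2 + k * Cwu)).
  { unfold f2, F0. eapply Rle_trans. apply (tube_lip T f u Df HFr tn Vb).
    - apply Htube; lra.
    - lra.
    - fold r. fold u0. replace (tn + k / 2 - tn) with (k / 2) by ring. rewrite Rabs_pos_eq by lra. nra.
    - lra.
    - fold r. fold u0. rewrite Rminus_diag, Rabs_R0, bnorm_sub_self. lra.
    - fold Lf. apply Rmult_le_compat_l. unfold Lf; lra.
      replace (tn + k / 2 - tn) with (k / 2) by ring. rewrite Rabs_pos_eq by lra. lra. }
  assert (Hu1L : forall tau, tn <= tau <= tn + k -> bnorm (bsub (u1 tau) (u1 tn)) <= B2 * k).
  { intros tau Htau.
    pose proof (mvi_deriv 0 T u1 u2 tn tau bzero B2 Hu2 ltac:(lra) ltac:(lra) ltac:(lra)) as H.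
    assert (Hc : forall t, tn <= t <= tau -> bnorm (bsub (u2 t) bzero) <= B2).
    { intros t Ht. replace (bsub (u2 t) bzero) with (u2 t) by vring. apply HB2. lra. }
    specialize (H Hc). replace (bsub (bsub (u1 tau) (u1 tn)) (bscal (tau - tn) bzero)) with (bsub (u1 tau) (u1 tn)) in H by vring.
    nra. }
  pose proof (mvi_deriv 0 T u u1 tn (tn + k) (u1 tn) (B2 * k) Hu1 ltac:(lra) ltac:(lra) ltac:(lra) Hu1L) as HuE.
  rewrite (Hu1eq tn) in HuE by lra. fold u0 F0 a in HuE.
  set (Psi2 := Psi (k / 2) (tn + k / 2) W) in *.
  replace (bsub Psi2 (u (tn + k))) with
    (badd (badd (badd (badd (bsub Psi2 (zz (k / 2))) (bsub (bsub (zz (k / 2)) W) (bscal (k / 2) f2)))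
       (bsub W (badd x0 (bscal k a)))) (bscal (k / 2) (bsub f2 F0)))
       (bopp (bsub (bsub (u (tn + k)) u0) (bscal (tn + k - tn) (badd a F0))))).
  2:{ unfold x0. vring. }
  eapply Rle_trans. apply bnorm_triangle. rewrite bnorm_opp.
  eapply Rle_trans. apply Rplus_le_compat_r. apply bnorm_triangle.
  eapply Rle_trans. apply Rplus_le_compat_r. apply Rplus_le_compat_r. apply bnorm_triangle.
  eapply Rle_trans. apply Rplus_le_compat_r. apply Rplus_le_compat_r. apply Rplus_le_compat_r. apply bnorm_triangle.
  rewrite bnorm_scal, Rabs_pos_eq by lra.
  replace (tn + k - tn) with k in HuE by ring.
  assert (Hpw : (k / 2) ^ (p + 1) <= (k / 2) ^ 2) by (apply pow_le_sq; lra || lia).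
  assert (H1 : bnorm (bsub Psi2 (zz (k / 2))) <= Rabs Cp * k ^ 2).
  { eapply Rle_trans. apply Hord2. eapply Rle_trans. apply Rmult_le_compat_r. apply pow_le; lra. apply Rle_abs.
    apply Rmult_le_compat_l. apply Rabs_pos. simpl. nra. }
  assert (H2 : Lf * (1 + Vb) * (k / 2) ^ 2 <= Lf * (1 + Vb) * k ^ 2).
  { apply Rmult_le_compat_l. unfold Lf; nra. simpl; nra. }
  assert (H4 : k / 2 * bnorm (bsub f2 F0) <= Lf * (1 + Cwu) * k ^ 2).
  { assert (k / 2 * bnorm (bsub f2 F0) <= k / 2 * (Lf * (k / 2 + k * Cwu))) by (apply Rmult_le_compat_l; lra).
    assert (0 <= Lf * k ^ 2 * Cwu) by (unfold Lf; simpl; apply Rmult_le_pos; [|lra]; apply Rmult_le_pos; nra).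
    assert (0 <= Lf * k ^ 2) by (unfold Lf; simpl; nra).
    simpl in *. nra. }
  assert (H5 : B2 * k * k <= B2 * k ^ 2) by (simpl; lra).
  assert (0 <= k ^ 2) by (simpl; nra).
  apply Rle_trans with (Rabs Cp * k ^ 2 + Lf * (1 + Vb) * k ^ 2 + CW * k ^ 2 + Lf * (1 + Cwu) * k ^ 2 + B2 * k ^ 2).
  - replace (tn + k - tn) with k by ring. lra.
  - assert (E : (Rabs Cp + Lf * (1 + Vb) + CW + Lf * (1 + Cwu) + B2 + 1) * k ^ 2 =
       Rabs Cp * k ^ 2 + Lf * (1 + Vb) * k ^ 2 + CW * k ^ 2 + Lf * (1 + Cwu) * k ^ 2 + B2 * k ^ 2 + k ^ 2) by ring.
    rewrite E. lra.
Qed.
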